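(* Let $M>2$, $p_M=\frac{M+2}{M-2}$, $m\ge2$, and for $p\in(1,p_M)$ let $v_p$ be the unique solution in $H^1_{0,M}$ of $-(t^{M-1}v')'=t^{M-1}|v|^{p-1}v$ on $(0,1)$, $v'(0)=0$, $v(1)=0$, with exactly $m$ nodal zones and $v_p(0)>0$. Fix $i\in\{1,\dots,m-1\}$ and let $w_{i,p}(r)=t_{i,p}^{2/(p-1)}v_p(t_{i,p}r)$ for $0\le r\le 1/t_{i,p}$. Assume that for a sequence $p_n\to p_M$, \[ \frac{s_{i-1,p_n}}{t_{i,p_n}}\to0\quad\text{and}\quad t_{i,p_n}\widetilde{\mathcal M}_{i-1,p_n}\to+\infty . \] Then $w_{i,p_n}\to0$ uniformly on $[1-\delta,1]$ for every $0<\delta<1$.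
   Context: $H^1_{0,M}$: measurable $v$ on $(0,1)$ with $\int_0^1t^{M-1}(v^2+|v'|^2)<\infty$, $v(1)=0$. $0=t_{0,p}<t_{1,p}<\dots<t_{m,p}=1$ are $0$ and the zeros of $v_p$; $s_{k,p}$ is the unique critical point of $v_p$ in $(t_{k,p},t_{k+1,p})$ with $s_{0,p}=0$; $\mathcal M_{k,p}=|v_p(s_{k,p})|$, $\widetilde{\mathcal M}_{k,p}=\mathcal M_{k,p}^{(p-1)/2}$. *)

(* Defs.v *)
From Stdlib Require Import Reals Lra.
From Coquelicot Require Import Coquelicot.
Open Scope R_scope.

Definition pM (M : R) : R := (M + 2) / (M - 2).

Definition spow (p x : R) : R := Rpower (Rabs x) (p - 1) * x.

(* v is a (classical, hence H^1_{0,M}) solution of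
   -(t^{M-1} v')' = t^{M-1} |v|^{p-1} v on (0,1), v'(0)=0, v(1)=0,
   with v continuous on [0,1]. *)
Definition radial_sol (M p : R) (v : R -> R) : Prop :=
  exists dv : R -> R,
    (forall t, 0 < t < 1 -> is_derive v t (dv t)) /\
    (forall t, 0 < t < 1 ->
       is_derive (fun s => Rpower s (M - 1) * dv s) t
                 (- (Rpower t (M - 1) * spow p (v t)))) /\
    filterlim dv (at_right 0) (locally 0) /\
    filterlim v (at_right 0) (locally (v 0)) /\
    filterlim v (at_left 1) (locally (v 1)) /\
    v 1 = 0.

(* t 0 = 0 < t 1 < ... < t m = 1 are 0 and the zeros of v in (0,1];
   in particular v has exactly m nodal zones. *)
Definition nodal_zeros (m : nat) (v : R -> R) (t : nat -> R) : Prop :=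
  t 0%nat = 0 /\ t m = 1 /\
  (forall k, (k < m)%nat -> t k < t (S k)) /\
  (forall x, 0 < x <= 1 ->
     (v x = 0 <-> exists k, (1 <= k <= m)%nat /\ x = t k)).

Definition crit_points (m : nat) (v : R -> R) (t s : nat -> R) : Prop :=
  s 0%nat = 0 /\
  forall k, (1 <= k)%nat -> (k < m)%nat ->
    t k < s k < t (S k) /\ is_derive v (s k) 0.

(* Main.v *)
Require Import Defs.
From Stdlib Require Import Reals Lra Psatz Lia Arith Classical.
From Coquelicot Require Import Coquelicot.
Open Scope R_scope.

Lemma dmul (f g : R -> R) (x a b : R) :
  is_derive f x a -> is_derive g x b -> is_derive (fun y => f y * g y) x (a * g x + f x * b).
Proof. intros Ha Hb. apply (is_derive_mult f g x a b Ha Hb). intros; apply Rmult_comm. Qed.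

Lemma dcomp (f g : R -> R) (x a b : R) :
  is_derive f (g x) a -> is_derive g x b -> is_derive (fun y => f (g y)) x (b * a).
Proof. intros Ha Hb. apply (is_derive_comp f g x a b Ha Hb). Qed.

Lemma dplus (f g : R -> R) (x a b : R) :
  is_derive f x a -> is_derive g x b -> is_derive (fun y => f y + g y) x (a + b).
Proof. intros Ha Hb. apply (is_derive_plus f g x a b Ha Hb). Qed.

Lemma dminus (f g : R -> R) (x a b : R) :
  is_derive f x a -> is_derive g x b -> is_derive (fun y => f y - g y) x (a - b).
Proof. intros Ha Hb. apply (is_derive_minus f g x a b Ha Hb). Qed.

Lemma dconst (c x : R) : is_derive (fun _ => c) x 0.
Proof. apply (is_derive_const (K:=R_AbsRing) c x). Qed.

Lemma did (x : R) : is_derive (fun y => y) x 1.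
Proof. apply (is_derive_id (K:=R_AbsRing) x). Qed.

Lemma dscal (f : R -> R) (k x a : R) : is_derive f x a -> is_derive (fun y => k * f y) x (k * a).
Proof. apply is_derive_scal. Qed.

Lemma dext (f g : R -> R) (x a b : R) : (forall y, f y = g y) -> a = b -> is_derive f x a -> is_derive g x b.
Proof. intros H -> Hf. apply (is_derive_ext f g x b H Hf). Qed.

Lemma dexp (x : R) : is_derive exp x (exp x).
Proof. apply is_derive_exp. Qed.

Lemma drpow (c x : R) : 0 < x -> is_derive (fun y => Rpower y c) x (c * Rpower x (c - 1)).
Proof. intros Hx. apply is_derive_Reals. apply derivable_pt_lim_power; auto. Qed.

Lemma drpow_loc (c x : R) (f : R -> R) : 0 < x -> (forall y, 0 < y -> f y = Rpower y c) ->
  is_derive f x (c * Rpower x (c - 1)).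
Proof.
  intros Hx Hf. apply is_derive_ext_loc with (f := fun y => Rpower y c).
  - apply locally_interval with (a := Finite 0) (b := p_infty); simpl; auto.
    intros y Hy _. symmetry; apply Hf; auto.
  - apply drpow; auto.
Qed.

Lemma dcont (f : R -> R) (x a : R) : is_derive f x a -> continuity_pt f x.
Proof.
  intros H. apply derivable_continuous_pt. exists a. apply is_derive_Reals; auto.
Qed.

Lemma mvt_le (f df : R -> R) a b K : a <= b ->
  (forall x, a <= x <= b -> is_derive f x (df x)) ->
  (forall x, a <= x <= b -> df x <= K) -> f b - f a <= K * (b - a).
Proof.
  intros Hab Hd Hk. destruct (Rle_lt_or_eq_dec _ _ Hab) as [Hlt|Heq].
  - destruct (MVT_cor3 f df a b Hlt) as [c [H1 [H2 H3]]].
    + intros x H1 H2. apply is_derive_Reals. apply Hd; lra.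
    + rewrite H3. assert (df c <= K) by (apply Hk; lra). nra.
  - subst. lra.
Qed.

Lemma mvt_ge (f df : R -> R) a b K : a <= b ->
  (forall x, a <= x <= b -> is_derive f x (df x)) ->
  (forall x, a <= x <= b -> K <= df x) -> K * (b - a) <= f b - f a.
Proof.
  intros Hab Hd Hk. destruct (Rle_lt_or_eq_dec _ _ Hab) as [Hlt|Heq].
  - destruct (MVT_cor3 f df a b Hlt) as [c [H1 [H2 H3]]].
    + intros x H1 H2. apply is_derive_Reals. apply Hd; lra.
    + rewrite H3. assert (K <= df c) by (apply Hk; lra). nra.
  - subst. lra.
Qed.

Lemma mvt_gt (f df : R -> R) a b : a < b ->
  (forall x, a <= x <= b -> is_derive f x (df x)) ->
  (forall x, a < x < b -> 0 < df x) -> f a < f b.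
Proof.
  intros Hlt Hd Hk.
  destruct (MVT_cor2 f df a b Hlt) as [c [H1 H2]].
  - intros x Hx. apply is_derive_Reals. apply Hd; lra.
  - assert (0 < df c) by (apply Hk; lra). nra.
Qed.

Lemma deq (f : R -> R) (x a b : R) : is_derive f x a -> a = b -> is_derive f x b.
Proof. intros H <-; auto. Qed.

Definition P1 (p x : R) := Rpower (Rabs x) (p - 1) * x * x.

Lemma Rpower_pos x y : 0 < Rpower x y.
Proof. unfold Rpower; apply exp_pos. Qed.

Lemma exp_le a b : a <= b -> exp a <= exp b.
Proof. intros [H|H]. left; apply exp_increasing; auto. subst; lra. Qed.

Lemma ln_le a b : 0 < a -> a <= b -> ln a <= ln b.
Proof. intros Ha [H|H]. left; apply ln_increasing; auto. subst; lra. Qed.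

Lemma Rpower_le1 y c : 0 < y <= 1 -> 0 <= c -> Rpower y c <= 1.
Proof.
  intros Hy Hc. unfold Rpower. rewrite <- exp_0. apply exp_le.
  assert (ln y <= 0). { rewrite <- ln_1. apply ln_le; lra. } nra.
Qed.

Lemma Rpower_add1 x c : 0 < x -> Rpower x c * x = Rpower x (c + 1).
Proof. intros. rewrite Rpower_plus, Rpower_1; auto. Qed.

Lemma dP1 (p x : R) : 1 < p -> is_derive (P1 p) x ((p + 1) * spow p x).
Proof.
  intros Hp. unfold spow.
  destruct (Rtotal_order x 0) as [Hn|[Hz|Hpos]].
  - apply is_derive_ext_loc with (f := fun y => Rpower (- y) (p + 1)).
    + apply locally_interval with (a := m_infty) (b := Finite 0); simpl; auto.
      intros y _ Hy. unfold P1. rewrite Rabs_left by lra.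
      replace (Rpower (- y) (p - 1) * y * y) with (Rpower (- y) (p - 1) * (-y) * (-y)) by ring.
      rewrite !Rpower_add1 by lra. f_equal; ring.
    + eapply deq. { apply (dcomp (fun y => Rpower y (p+1)) (fun y => - y)).
      apply drpow. lra. apply (is_derive_opp (fun y => y) x 1). apply did. }
      rewrite Rabs_left by lra. replace (p + 1 - 1) with (p - 1 + 1) by ring.
      rewrite <- Rpower_add1 by lra. change (opp 1) with (-1). ring.
  - subst x. apply is_derive_Reals. intros eps Heps.
    exists (mkposreal (Rmin 1 eps) ltac:(apply Rmin_pos; lra)). simpl.
    intros h Hh0 Hh. unfold P1. rewrite Rplus_0_l, Rabs_R0, Rmult_0_r, Rmult_0_r, Rmult_0_r.
    replace ((Rpower (Rabs h) (p - 1) * h * h - 0) / h - 0) with (Rpower (Rabs h) (p - 1) * h)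
      by (field; auto).
    assert (Hb : Rpower (Rabs h) (p - 1) <= 1).
    { apply Rpower_le1. split. apply Rabs_pos_lt; auto.
      assert (Rmin 1 eps <= 1) by apply Rmin_l. lra. lra. }
    assert (Rmin 1 eps <= eps) by apply Rmin_r.
    rewrite Rabs_mult, (Rabs_right (Rpower _ _)) by (left; apply Rpower_pos).
    assert (0 <= Rabs h) by apply Rabs_pos. nra.
  - apply is_derive_ext_loc with (f := fun y => Rpower y (p + 1)).
    + apply locally_interval with (a := Finite 0) (b := p_infty); simpl; auto.
      intros y Hy _. unfold P1. rewrite Rabs_right by lra.
      rewrite !Rpower_add1 by lra. f_equal; ring.
    + eapply deq. apply drpow; lra.
      rewrite Rabs_right by lra. replace (p + 1 - 1) with (p - 1 + 1) by ring.
      rewrite <- Rpower_add1 by lra. ring.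
Qed.

Lemma cont_eps (f : R -> R) c eps : continuity_pt f c -> 0 < eps ->
  exists d, 0 < d /\ forall t, Rabs (t - c) < d -> Rabs (f t - f c) < eps.
Proof.
  intros Hc He. apply continuity_pt_locally with (eps := mkposreal eps He) in Hc.
  destruct Hc as [d Hd]. exists d. split. apply cond_pos.
  intros t Ht. apply Hd. apply Ht.
Qed.

Lemma deriv_sign (f : R -> R) (c l : R) : is_derive f c l -> 0 < l ->
  exists d, 0 < d /\ (forall t, c - d < t < c -> f t < f c) /\ (forall t, c < t < c + d -> f c < f t).
Proof.
  intros Hd Hl. apply is_derive_Reals in Hd.
  destruct (Hd (l/2) ltac:(lra)) as [d Hdd].
  exists d. split. apply cond_pos. split.
  - intros t Ht. specialize (Hdd (t - c) ltac:(lra)).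
    rewrite Rabs_left in Hdd by lra. specialize (Hdd ltac:(lra)).
    replace (c + (t - c)) with t in Hdd by ring.
    apply Rabs_def2 in Hdd. destruct Hdd as [H1 H2].
    assert (Hq : 0 < (f t - f c) / (t - c)) by lra.
    assert (t - c < 0) by lra.
    assert (E : f t - f c = ((f t - f c) / (t - c)) * (t - c)) by (field; lra). nra.
  - intros t Ht. specialize (Hdd (t - c) ltac:(lra)).
    rewrite Rabs_right in Hdd by lra. specialize (Hdd ltac:(lra)).
    replace (c + (t - c)) with t in Hdd by ring.
    apply Rabs_def2 in Hdd. destruct Hdd as [H1 H2].
    assert (Hq : 0 < (f t - f c) / (t - c)) by lra.
    assert (E : f t - f c = ((f t - f c) / (t - c)) * (t - c)) by (field; lra). nra.
Qed.


Lemma cross (f df : R -> R) a b :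
  (forall x, a <= x <= b -> is_derive f x (df x)) ->
  (forall x, a <= x <= b -> f x = 0 -> 0 < df x) ->
  forall x y, a <= x -> x < y -> y <= b -> 0 <= f x -> 0 < f y.
Proof.
  intros Hd Hz x y Hax Hxy Hyb Hfx.
  destruct (Rlt_or_le 0 (f y)) as [Hy|Hy]; auto. exfalso.
  assert (Hx' : exists x', x <= x' < y /\ 0 < f x').
  { destruct Hfx as [Hfx|Hfx].
    - exists x. split; lra.
    - destruct (deriv_sign f x (df x) (Hd x ltac:(lra)) (Hz x ltac:(lra) (eq_sym Hfx)))
        as [d [Hd0 [_ Hd2]]].
      exists (x + Rmin d (y - x) / 2).
      assert (Rmin d (y - x) <= d) by apply Rmin_l.
      assert (Rmin d (y - x) <= y - x) by apply Rmin_r.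
      assert (0 < Rmin d (y - x)) by (apply Rmin_pos; lra).
      split. lra. rewrite Hfx. apply Hd2. lra. }
  destruct Hx' as [x' [Hx'1 Hx'2]].
  set (E := fun z => x' <= z <= y /\ forall t, x' <= t <= z -> 0 < f t).
  assert (HEb : bound E). { exists y. intros z [Hz1 _]. lra. }
  assert (HEx : exists z, E z). { exists x'. split. lra. intros t Ht. replace t with x' by lra. auto. }
  destruct (completeness E HEb HEx) as [c [Hc1 Hc2]].
  assert (Hcx : x' <= c). { apply Hc1. destruct HEx. unfold E. split. lra. intros t Ht. replace t with x' by lra. auto. }
  assert (Hcy : c <= y). { apply Hc2. intros z [Hz1 _]. lra. }
  assert (HA : forall t, x' <= t < c -> 0 < f t).
  { intros t Ht. destruct (classic (exists z, E z /\ t < z)) as [[z [[Hz1 Hz2] Hz3]]|Hn].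
    - apply Hz2. lra.
    - exfalso. assert (c <= t). { apply Hc2. intros z Ez. destruct (Rle_or_lt z t); auto.
        exfalso; apply Hn; exists z; auto. } lra. }
  assert (Hcc : continuity_pt f c) by (apply (dcont f c (df c)); apply Hd; lra).
  destruct (Rtotal_order (f c) 0) as [Hn|[H0|Hp]].
  - assert (x' < c). { destruct (Req_dec x' c); [subst; lra| lra]. }
    destruct (cont_eps f c (- f c) Hcc ltac:(lra)) as [d [Hd0 Hd1]].
    set (t := Rmax x' (c - d / 2)).
    assert (x' <= t) by apply Rmax_l. assert (c - d/2 <= t) by apply Rmax_r.
    assert (t < c). { unfold t. apply Rmax_lub_lt; lra. }
    assert (0 < f t) by (apply HA; lra).
    assert (HH : Rabs (f t - f c) < - f c) by (apply Hd1; rewrite Rabs_left; lra).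
    apply Rabs_def2 in HH. lra.
  - assert (x' < c). { destruct (Req_dec x' c); [subst; lra| lra]. }
    destruct (deriv_sign f c (df c) (Hd c ltac:(lra)) (Hz c ltac:(lra) H0)) as [d [Hd0 [Hd1 _]]].
    set (t := Rmax x' (c - d / 2)).
    assert (x' <= t) by apply Rmax_l. assert (c - d/2 <= t) by apply Rmax_r.
    assert (t < c). { unfold t. apply Rmax_lub_lt; lra. }
    assert (0 < f t) by (apply HA; lra).
    assert (f t < f c) by (apply Hd1; lra). lra.
  - assert (c < y). { destruct (Req_dec c y); [subst; lra| lra]. }
    destruct (cont_eps f c (f c) Hcc ltac:(lra)) as [d [Hd0 Hd1]].
    set (z := Rmin (c + d / 2) y).
    assert (z <= c + d/2) by apply Rmin_l. assert (z <= y) by apply Rmin_r.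
    assert (c < z). { unfold z. apply Rmin_glb_lt; lra. }
    assert (E z). { split. lra. intros t Ht. destruct (Rlt_or_le t c). apply HA; lra.
      assert (HH : Rabs (f t - f c) < f c) by (apply Hd1; rewrite Rabs_right; lra).
      apply Rabs_def2 in HH. lra. }
    assert (z <= c) by (apply Hc1; auto). lra.
Qed.

Definition SYS (p al ga : R) (Y Z : R -> R) (s0 s1 : R) :=
  forall s, s0 <= s <= s1 ->
    is_derive Y s (al * Y s - Z s) /\ is_derive Z s (spow p (Y s) - ga * Z s).

Definition Hen (p al be : R) (Y Z : R -> R) (s : R) : R :=
  (al * Y s - Z s) * (al * Y s - Z s) / 2 - be * (Y s * Y s) / 2 + P1 p (Y s) / (p + 1).

Lemma Hen_deriv p al ga Y Z s0 s1 s : 1 < p -> SYS p al ga Y Z s0 s1 -> s0 <= s <= s1 ->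
  is_derive (Hen p al (al * ga) Y Z) s ((al - ga) * ((al * Y s - Z s) * (al * Y s - Z s))).
Proof.
  intros Hp HS Hs. destruct (HS s Hs) as [HY HZ]. unfold Hen.
  assert (HW : is_derive (fun t => al * Y t - Z t) s (al * (al * Y s - Z s) - (spow p (Y s) - ga * Z s))).
  { apply dminus; auto. apply dscal; auto. }
  assert (H1 : is_derive (fun t => (al * Y t - Z t) * (al * Y t - Z t) / 2) s
     (/2 * ((al * (al * Y s - Z s) - (spow p (Y s) - ga * Z s)) * (al * Y s - Z s)
        + (al * Y s - Z s) * (al * (al * Y s - Z s) - (spow p (Y s) - ga * Z s))))).
  { eapply dext. 3: apply (dscal (fun t => (al * Y t - Z t) * (al * Y t - Z t)) (/2)), dmul; [exact HW|exact HW]. intro y; simpl; field. reflexivity. }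
  assert (H2 : is_derive (fun t => al * ga * (Y t * Y t) / 2) s
     (al * ga / 2 * ((al * Y s - Z s) * Y s + Y s * (al * Y s - Z s)))).
  { eapply dext. 3: apply (dscal (fun t => Y t * Y t) (al*ga/2)), dmul; [exact HY|exact HY]. intro y; simpl; field. reflexivity. }
  assert (H3 : is_derive (fun t => P1 p (Y t) / (p + 1)) s
     (/ (p + 1) * ((al * Y s - Z s) * ((p + 1) * spow p (Y s))))).
  { eapply dext. 3: apply (dscal (fun t => P1 p (Y t)) (/(p+1))), (dcomp (P1 p) Y s); [apply dP1; exact Hp|exact HY].
    intro y; simpl; field; lra. reflexivity. }
  eapply deq. apply dplus. apply dminus. exact H1. exact H2. exact H3.
  field. lra.
Qed.

Lemma Hmono p al ga Y Z s0 s1 x y : 1 < p -> SYS p al ga Y Z s0 s1 -> ga <= al ->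
  s0 <= x -> x <= y -> y <= s1 -> Hen p al (al * ga) Y Z x <= Hen p al (al * ga) Y Z y.
Proof.
  intros Hp HS Hga H1 H2 H3.
  assert (0 * (y - x) <= Hen p al (al * ga) Y Z y - Hen p al (al * ga) Y Z x); [|lra].
  apply (mvt_ge _ (fun s => (al - ga) * ((al * Y s - Z s) * (al * Y s - Z s)))); auto.
  - intros s Hs. apply (Hen_deriv p al ga Y Z s0 s1); auto; lra.
  - intros s Hs. apply Rmult_le_pos. lra. apply Rle_0_sqr.
Qed.

Lemma dWn p al ga Y Z s0 s1 s : SYS p al ga Y Z s0 s1 -> s0 <= s <= s1 ->
  is_derive (fun t => Z t - al * Y t) s ((spow p (Y s) - ga * Z s) - al * (al * Y s - Z s)).
Proof.
  intros HS Hs. destruct (HS s Hs) as [HY HZ]. apply dminus; auto. apply dscal; auto.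
Qed.

Lemma P1_pos p x : 0 < x -> P1 p x = Rpower x (p - 1) * x * x.
Proof. intros. unfold P1. rewrite Rabs_right by lra. auto. Qed.

Lemma spow_pos p x : 0 < x -> spow p x = Rpower x (p - 1) * x.
Proof. intros. unfold spow. rewrite Rabs_right by lra. auto. Qed.

Lemma P1_nonneg p x : 0 <= P1 p x.
Proof. unfold P1. rewrite Rmult_assoc. apply Rmult_le_pos. left; apply Rpower_pos. apply Rle_0_sqr. Qed.

Lemma unimodal p al ga Y Z s0 s1 : 1 < p -> 0 < ga -> ga <= al -> SYS p al ga Y Z s0 s1 -> s0 < s1 ->
  (forall s, s0 <= s < s1 -> 0 < Y s) -> 0 < Z s1 -> Y s1 = 0 -> 0 <= Hen p al (al * ga) Y Z s0 ->
  exists sm, s0 <= sm < s1 /\ 0 <= Z sm - al * Y sm /\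
    (sm = s0 \/ forall s, s0 <= s <= sm -> Z s - al * Y s <= 0) /\
    (forall s, sm < s <= s1 -> 0 < Z s - al * Y s).
Proof.
  intros Hp Hga Hal HS Hs01 HYp HZ1 HY1 HH0.
  set (Wn := fun t => Z t - al * Y t).
  assert (HD : forall x, s0 <= x <= s1 -> is_derive Wn x ((spow p (Y x) - ga * Z x) - al * (al * Y x - Z x))).
  { intros x Hx. apply (dWn p al ga Y Z s0 s1); auto. }
  assert (HZr : forall x, s0 <= x <= s1 -> Wn x = 0 -> 0 < (spow p (Y x) - ga * Z x) - al * (al * Y x - Z x)).
  { intros x Hx HW. unfold Wn in HW.
    assert (x < s1). { destruct (Req_dec x s1); [subst x; rewrite HY1 in HW; lra|lra]. }
    assert (Hy : 0 < Y x) by (apply HYp; lra).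
    assert (HH : 0 <= Hen p al (al * ga) Y Z x).
    { apply Rle_trans with (1 := HH0). apply (Hmono p al ga Y Z s0 s1); auto; lra. }
    unfold Hen in HH. rewrite P1_pos in HH by auto. rewrite spow_pos by auto.
    assert (Zx : Z x = al * Y x) by lra. rewrite Zx in HH |- *.
    set (R0 := Rpower (Y x) (p - 1)) in *. set (y := Y x) in *.
    assert (0 < al) by lra.
    assert (HR : (p + 1) * (al * ga) / 2 <= R0).
    { assert (0 < y * y) by nra.
      assert (HH' : 0 <= (R0 * y * y / (p + 1) - al * ga * (y * y) / 2)).
      { assert (E : al * y - al * y = 0) by ring. rewrite E in HH. lra. }
      assert (0 <= (y * y) * (R0 - (p+1) * (al * ga) / 2)).
      { replace ((y * y) * (R0 - (p+1) * (al * ga) / 2)) with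
          ((p + 1) * (R0 * y * y / (p + 1) - al * ga * (y * y) / 2)) by (field; lra).
        apply Rmult_le_pos; lra. }
      nra. }
    assert (0 < al * ga) by nra.
    replace (R0 * y - ga * (al * y) - al * (al * y - al * y)) with (y * (R0 - al * ga)) by ring.
    apply Rmult_lt_0_compat. lra. assert (al * ga < (p+1) * (al*ga) / 2) by nra. lra. }
  assert (Hcr := cross Wn _ s0 s1 HD HZr).
  assert (HW1 : 0 < Wn s1). { unfold Wn. rewrite HY1. lra. }
  destruct (Rlt_or_le 0 (Wn s0)) as [Hw0|Hw0].
  - exists s0. split. lra. split. unfold Wn in Hw0; lra. split. auto.
    intros s Hs. apply (Hcr s0 s); lra.
  - destruct (Req_dec (Wn s0) 0) as [Hw0'|Hw0'].
    + exists s0. split. lra. split. unfold Wn in Hw0'; lra. split. auto.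
      intros s Hs. apply (Hcr s0 s); lra.
    + destruct (Ranalysis5.IVT_interv Wn s0 s1) as [z [Hz1 Hz2]].
      { intros a Ha. apply (dcont Wn a _ (HD a Ha)). }
      lra. lra. lra.
      assert (z < s1). { destruct (Req_dec z s1); [subst z; lra|lra]. }
      exists z. split. lra. split. unfold Wn in Hz2; lra. split.
      * right. intros s Hs. destruct (Rle_or_lt (Wn s) 0) as [Hl|Hl]. unfold Wn in Hl; lra.
        exfalso. assert (s < z). { destruct (Req_dec s z); [subst s; lra|lra]. }
        assert (0 < Wn z) by (apply (Hcr s z); lra). lra.
      * intros s Hs. apply (Hcr z s); lra.
Qed.

Lemma gain p al ga Y Z s0 s1 : 1 < p -> 0 < ga -> ga <= al -> SYS p al ga Y Z s0 s1 -> s0 < s1 ->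
  (forall s, s0 <= s < s1 -> 0 < Y s) -> 0 < Z s1 -> Y s1 = 0 ->
  (forall s, s0 <= s <= s1 -> 0 <= Z s) -> 0 <= Hen p al (al * ga) Y Z s0 ->
  exists Ym, 0 <= Ym /\ (forall s, s0 <= s <= s1 -> Y s <= Ym) /\
    P1 p Ym / (p + 1) - al * ga * (Ym * Ym) / 2 <= Hen p al (al * ga) Y Z s0 + (al - ga) * al * (Ym * Ym) /\
    Hen p al (al * ga) Y Z s1 <= Hen p al (al * ga) Y Z s0 + (al - ga) * al * (Ym * Ym)
       + (al - ga) * Ym * sqrt (2 * Hen p al (al * ga) Y Z s1 + al * ga * (Ym * Ym)).
Proof.
  intros Hp Hga Hal HS Hs01 HYp HZ1 HY1 HZp HH0.
  destruct (unimodal p al ga Y Z s0 s1 Hp Hga Hal HS Hs01 HYp HZ1 HY1 HH0)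
    as [sm [Hsm [Hwm [Hasc Hdesc]]]].
  set (H := Hen p al (al * ga) Y Z).
  set (Ym := Y sm).
  assert (HYm : 0 < Ym) by (apply HYp; lra).
  assert (HDY : forall s, s0 <= s <= s1 -> is_derive Y s (al * Y s - Z s)) by (intros; apply HS; auto).
  assert (HDH : forall s, s0 <= s <= s1 -> is_derive H s ((al - ga) * ((al * Y s - Z s) * (al * Y s - Z s))))
    by (intros; apply (Hen_deriv p al ga Y Z s0 s1); auto).
  assert (Hmon : forall x y, s0 <= x -> x <= y -> y <= s1 -> H x <= H y)
    by (intros; apply (Hmono p al ga Y Z s0 s1); auto).
  assert (HYdesc : forall s, sm <= s <= s1 -> Y s <= Ym).
  { intros s Hs. assert (Y s - Y sm <= 0 * (s - sm)); [|unfold Ym; lra].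
    apply (mvt_le Y (fun t => al * Y t - Z t)). lra. intros; apply HDY; lra.
    intros x Hx. destruct (Req_dec x sm). subst x. lra.
    assert (0 < Z x - al * Y x) by (apply Hdesc; lra). lra. }
  assert (HYasc : forall s, s0 <= s <= sm -> Y s <= Ym).
  { intros s Hs. destruct Hasc as [Ha|Ha]. replace s with sm by lra. unfold Ym; lra.
    assert (0 * (sm - s) <= Y sm - Y s); [|unfold Ym; lra].
    apply (mvt_ge Y (fun t => al * Y t - Z t)). lra. intros; apply HDY; lra.
    intros x Hx. assert (Z x - al * Y x <= 0) by (apply Ha; lra). lra. }
  assert (HYall : forall s, s0 <= s <= s1 -> Y s <= Ym).
  { intros s Hs. destruct (Rle_or_lt s sm). apply HYasc; lra. apply HYdesc; lra. }
  assert (HY0 : 0 < Y s0) by (apply HYp; lra).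
  assert (Hasc_e : H sm <= H s0 + (al - ga) * al * (Ym * Ym)).
  { destruct Hasc as [Ha|Ha].
    - subst sm. assert (0 <= (al - ga) * al * (Ym * Ym)).
      { apply Rmult_le_pos. apply Rmult_le_pos; lra. apply Rle_0_sqr. } lra.
    - assert (Hk : (H sm - (al - ga) * al * Ym * Y sm) - (H s0 - (al - ga) * al * Ym * Y s0) <= 0 * (sm - s0)).
      { apply (mvt_le (fun t => H t - (al - ga) * al * Ym * Y t)
          (fun t => (al - ga) * ((al * Y t - Z t) * (al * Y t - Z t)) - (al - ga) * al * Ym * (al * Y t - Z t))).
        lra. intros x Hx. apply dminus. apply HDH; lra. apply dscal. apply HDY; lra.
        intros x Hx. assert (Hw1 : Z x - al * Y x <= 0) by (apply Ha; lra).
        assert (Hw2 : 0 <= Z x) by (apply HZp; lra).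
        assert (Hw3 : Y x <= Ym) by (apply HYasc; lra).
        replace ((al - ga) * ((al * Y x - Z x) * (al * Y x - Z x)) - (al - ga) * al * Ym * (al * Y x - Z x))
          with ((al - ga) * ((al * Y x - Z x) * ((al * Y x - Z x) - al * Ym))) by ring.
        assert (0 <= (al * Y x - Z x)) by lra.
        assert ((al * Y x - Z x) - al * Ym <= 0).
        { assert (al * Y x <= al * Ym) by (apply Rmult_le_compat_l; lra). lra. }
        assert (0 <= (al * Y x - Z x) * (al * Ym - (al * Y x - Z x))) by (apply Rmult_le_pos; lra).
        assert (0 <= (al - ga) * ((al * Y x - Z x) * (al * Ym - (al * Y x - Z x)))) by (apply Rmult_le_pos; lra).
        lra. }
      fold Ym in Hk.
      assert (0 <= (al - ga) * al * Ym * Y s0).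
      { apply Rmult_le_pos. apply Rmult_le_pos. apply Rmult_le_pos; lra. lra. lra. } lra. }
  assert (Hlow : P1 p Ym / (p + 1) - al * ga * (Ym * Ym) / 2 <= H sm).
  { unfold H, Hen. fold Ym. assert (0 <= (al * Ym - Z sm) * (al * Ym - Z sm) / 2).
    { apply Rmult_le_pos. apply Rle_0_sqr. lra. } lra. }
  set (h := H s1).
  assert (Hh0 : 0 <= h) by (unfold h; apply Rle_trans with (1 := HH0); apply Hmon; lra).
  set (K := sqrt (2 * h + al * ga * (Ym * Ym))).
  assert (HKK : K * K = 2 * h + al * ga * (Ym * Ym)).
  { unfold K. apply sqrt_sqrt. assert (0 <= al * ga * (Ym * Ym)).
    { apply Rmult_le_pos. apply Rmult_le_pos; lra. apply Rle_0_sqr. } lra. }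
  assert (HK0 : 0 <= K) by apply sqrt_pos.
  assert (Hdesc_e : h <= H sm + (al - ga) * K * Ym).
  { assert (Hk : (H s1 + (al - ga) * K * Y s1) - (H sm + (al - ga) * K * Y sm) <= 0 * (s1 - sm)).
    { apply (mvt_le (fun t => H t + (al - ga) * K * Y t)
          (fun t => (al - ga) * ((al * Y t - Z t) * (al * Y t - Z t)) + (al - ga) * K * (al * Y t - Z t))).
      lra. intros x Hx. apply dplus. apply HDH; lra. apply dscal. apply HDY; lra.
      intros x Hx. set (W := al * Y x - Z x).
      assert (Hw1 : W <= 0).
      { unfold W. destruct (Req_dec x sm). subst x; lra.
        assert (0 < Z x - al * Y x) by (apply Hdesc; lra). lra. }
      assert (HWW : W * W <= K * K).
      { rewrite HKK. assert (Hx0 : H x <= h) by (unfold h; apply Hmon; lra).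
        unfold H, Hen in Hx0. fold W in Hx0.
        assert (0 <= P1 p (Y x) / (p + 1)) by (apply Rdiv_le_0_compat; [apply P1_nonneg|lra]).
        assert (0 <= Y x). { destruct (Req_dec x s1). subst; lra. left; apply HYp; lra. }
        assert (Y x <= Ym) by (apply HYdesc; lra).
        assert (Y x * Y x <= Ym * Ym) by (apply Rmult_le_compat; lra).
        assert (al * ga * (Y x * Y x) <= al * ga * (Ym * Ym)).
        { apply Rmult_le_compat_l. apply Rmult_le_pos; lra. auto. }
        lra. }
      assert (Hw2 : - K <= W).
      { destruct (Rle_or_lt (- K) W); auto. exfalso.
        assert (K * K < (- W) * (- W)) by (apply Rmult_le_0_lt_compat; lra). lra. }
      replace ((al - ga) * (W * W) + (al - ga) * K * W) with ((al - ga) * (W * (W + K))) by ring.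
      assert (0 <= - W * (W + K)) by (apply Rmult_le_pos; lra).
      assert (0 <= (al - ga) * (- W * (W + K))) by (apply Rmult_le_pos; lra). lra. }
    rewrite HY1 in Hk. fold Ym h in Hk. lra. }
  exists Ym. split. lra. split. auto. split. lra.
  fold h. fold K. lra.
Qed.

Lemma ric_alg (p al ga y u W T dd ka : R) : 1 < p -> 0 < y -> 0 < dd -> dd <= u ->
  dd * dd = (p + 1) * (al * ga) / 2 -> ka = al - ga -> 0 <= ka -> ka <= dd * ((p - 1) / (p + 1)) ->
  T = W / (y * u) ->
  ka * T - u + al * ga / u - (p + 1) / 2 * u * (T * T) <= - (dd * ((p - 1) / (p + 1)) / 2) * (1 + T * T).
Proof.
  intros Hp Hy Hd Hu Hdd Hka Hka0 Hka1 HT.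
  set (cc := (p - 1) / (p + 1)) in *.
  assert (Hcc0 : 0 < cc) by (unfold cc; apply Rdiv_lt_0_compat; lra).
  assert (Hcc1 : cc < 1) by (unfold cc; apply (Rmult_lt_reg_r (p+1)); [lra|]; field_simplify; lra).
  assert (Hu0 : 0 < u) by lra.
  assert (Hbe : al * ga / u <= 2 * u / (p + 1)).
  { assert (E1 : al * ga = 2 * (dd * dd) / (p + 1)) by (rewrite Hdd; field; lra).
    assert (E2 : dd * dd <= u * u) by (apply Rmult_le_compat; lra).
    assert (E3 : al * ga <= 2 * (u * u) / (p + 1)).
    { rewrite E1. unfold Rdiv. apply Rmult_le_compat_r. left; apply Rinv_0_lt_compat; lra. lra. }
    assert (E4 : al * ga / u <= 2 * (u * u) / (p + 1) / u).
    { unfold Rdiv at 1 3. apply Rmult_le_compat_r. left; apply Rinv_0_lt_compat; lra. lra. }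
    replace (2 * (u * u) / (p + 1) / u) with (2 * u / (p + 1)) in E4 by (field; lra). lra. }
  assert (H1 : - u + al * ga / u <= - dd * cc).
  { assert (- u + 2 * u / (p + 1) = - u * cc) by (unfold cc; field; lra).
    assert (dd * cc <= u * cc) by (apply Rmult_le_compat_r; lra). lra. }
  assert (HT2 : 0 <= T * T) by apply Rle_0_sqr.
  assert (H2 : dd * cc * (T * T) <= (p + 1) / 2 * u * (T * T)).
  { apply Rmult_le_compat_r. auto.
    assert (dd * cc <= u * 1) by (apply Rmult_le_compat; lra).
    assert (u * 1 <= (p + 1) / 2 * u) by (rewrite Rmult_comm; apply Rmult_le_compat_r; lra). lra. }
  assert (H3 : ka * T <= dd * cc * (1 + T * T) / 2).
  { assert (T <= (1 + T * T) / 2). { assert (0 <= (T - 1) * (T - 1)) by apply Rle_0_sqr. lra. }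
    assert (0 <= (1 + T * T) / 2) by lra.
    destruct (Rle_or_lt 0 T).
    - assert (ka * T <= ka * ((1 + T * T) / 2)) by (apply Rmult_le_compat_l; lra).
      assert (ka * ((1 + T * T) / 2) <= dd * cc * ((1 + T * T) / 2)) by (apply Rmult_le_compat_r; lra).
      lra.
    - assert (ka * T <= 0). { assert (0 <= ka * (- T)) by (apply Rmult_le_pos; lra). lra. }
      assert (0 <= dd * cc * (1 + T * T) / 2).
      { apply Rmult_le_pos; [|lra]. apply Rmult_le_pos. apply Rmult_le_pos; lra. lra. } lra. }
  lra.
Qed.

Lemma Rpower_m1 y c : 0 < y -> Rpower y (c - 1) = Rpower y c / y.
Proof. intros Hy. replace (Rpower y c) with (Rpower y (c - 1) * y).
  field; lra. rewrite Rpower_add1 by auto. f_equal; ring. Qed.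

Lemma ric_time p al ga Y Z s0 s1 a1 a2 y1 dd : 1 < p -> 0 < ga -> ga <= al -> SYS p al ga Y Z s0 s1 ->
  s0 <= a1 -> a1 <= a2 -> a2 <= s1 -> 0 < y1 -> (forall t, a1 <= t <= a2 -> y1 <= Y t) ->
  0 < dd -> dd * dd = (p + 1) * (al * ga) / 2 -> Rpower y1 (p - 1) = dd * dd ->
  al - ga <= dd * ((p - 1) / (p + 1)) ->
  a2 - a1 <= 2 * PI / (dd * ((p - 1) / (p + 1))).
Proof.
  intros Hp Hga Hal HS H1 H2 H3 Hy1 HY Hdd Hdd2 Hy1p Hka.
  set (cc := (p - 1) / (p + 1)) in *.
  assert (Hcc0 : 0 < cc) by (unfold cc; apply Rdiv_lt_0_compat; lra).
  set (c := (p - 1) / 2).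
  set (u := fun t => Rpower (Y t) c).
  set (th := fun t => (al * Y t - Z t) / (Y t * u t)).
  set (F := fun t => atan (th t)).
  assert (HD : forall t, a1 <= t <= a2 -> exists D, is_derive F t D /\ D <= - (dd * cc / 2)).
  { intros t Ht. assert (Hyt : 0 < Y t) by (specialize (HY t Ht); lra).
    destruct (HS t ltac:(lra)) as [HYd HZd].
    assert (Hud : is_derive u t ((al * Y t - Z t) * (c * Rpower (Y t) (c - 1)))).
    { apply (dcomp (fun y => Rpower y c) Y t). apply drpow; auto. auto. }
    assert (HWd : is_derive (fun t => al * Y t - Z t) t (al * (al * Y t - Z t) - (spow p (Y t) - ga * Z t))).
    { apply dminus; auto. apply dscal; auto. }
    assert (HYu : is_derive (fun t => Y t * u t) t ((al * Y t - Z t) * u t + Y t * ((al * Y t - Z t) * (c * Rpower (Y t) (c - 1))))).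
    { apply dmul; auto. }
    assert (Hu0 : 0 < u t) by (unfold u; apply Rpower_pos).
    assert (Hth : is_derive th t (((al * (al * Y t - Z t) - (spow p (Y t) - ga * Z t)) * (Y t * u t)
       - (al * Y t - Z t) * ((al * Y t - Z t) * u t + Y t * ((al * Y t - Z t) * (c * Rpower (Y t) (c - 1)))))
       / (Y t * u t) ^ 2)).
    { apply (is_derive_div (fun t => al * Y t - Z t) (fun t => Y t * u t)); auto.
      apply Rgt_not_eq. apply Rmult_lt_0_compat; auto. }
    assert (HF := dcomp atan th t _ _ (is_derive_atan (th t)) Hth).
    eexists. split. exact HF.
    assert (E1 : Rpower (Y t) (c - 1) = u t / Y t) by (apply Rpower_m1; auto).
    assert (E2 : spow p (Y t) = u t * u t * Y t).
    { rewrite spow_pos by auto. unfold u. rewrite <- Rpower_plus. unfold c.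
      replace ((p - 1) / 2 + (p - 1) / 2) with (p - 1) by field. auto. }
    rewrite E1, E2. fold (th t).
    assert (Hud2 : dd <= u t).
    { assert (dd * dd <= u t * u t).
      { rewrite <- Hy1p. unfold u. rewrite <- Rpower_plus. unfold c.
        replace ((p - 1) / 2 + (p - 1) / 2) with (p - 1) by field.
        apply Rle_Rpower_l. lra. split; auto. }
      destruct (Rle_or_lt dd (u t)); auto. exfalso.
      assert (u t * u t < dd * dd) by (apply Rmult_le_0_lt_compat; lra). lra. }
    assert (Hric := ric_alg p al ga (Y t) (u t) (al * Y t - Z t) (th t) dd (al - ga) Hp Hyt Hdd Hud2 Hdd2
      eq_refl ltac:(lra) Hka eq_refl).
    fold cc in Hric.
    set (T := th t) in *.
    assert (ET : ((al * (al * Y t - Z t) - (u t * u t * Y t - ga * Z t)) * (Y t * u t) -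
       (al * Y t - Z t) * ((al * Y t - Z t) * u t + Y t * ((al * Y t - Z t) * (c * (u t / Y t))))) /
       (Y t * u t) ^ 2 = (al - ga) * T - u t + al * ga / u t - (p + 1) / 2 * u t * (T * T)).
    { unfold T, th, c. field. split; lra. }
    rewrite ET.
    assert (HT : 0 < 1 + T²) by (unfold Rsqr; assert (0 <= T * T) by apply Rle_0_sqr; lra).
    apply (Rmult_le_reg_r (1 + T²)). auto.
    replace (((al - ga) * T - u t + al * ga / u t - (p + 1) / 2 * u t * (T * T)) * / (1 + T²) * (1 + T²))
      with ((al - ga) * T - u t + al * ga / u t - (p + 1) / 2 * u t * (T * T)) by (field; lra).
    unfold Rsqr. lra. }
  assert (HF : F a2 - F a1 <= - (dd * cc / 2) * (a2 - a1)).
  { apply (mvt_le F (Derive F)). auto.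
    - intros x Hx. destruct (HD x Hx) as [D [HD1 _]]. rewrite (is_derive_unique F x D HD1). auto.
    - intros x Hx. destruct (HD x Hx) as [D [HD1 HD2]]. rewrite (is_derive_unique F x D HD1). auto. }
  unfold F in HF. assert (B1 := atan_bound (th a1)). assert (B2 := atan_bound (th a2)).
  assert (Hp2 : (dd * cc / 2) * (a2 - a1) < PI) by lra.
  assert (0 < dd * cc) by (apply Rmult_lt_0_compat; auto).
  apply (Rmult_le_reg_r (dd * cc)). auto.
  replace (2 * PI / (dd * cc) * (dd * cc)) with (2 * PI) by (field; lra). lra.
Qed.

Lemma Rmult_le_0_r_compat_helper (a b c : R) : 0 <= a -> b <= 0 -> 0 < c -> a * b * / c <= 0.
Proof. intros. assert (0 <= a * (- b) * / c). { apply Rmult_le_pos. apply Rmult_le_pos; lra.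
  left; apply Rinv_0_lt_compat; auto. } lra. Qed.

Lemma sq_ge (W q : R) : 0 <= q -> q * q <= W * W -> 0 <= W -> q <= W.
Proof. intros Hq HW H0. destruct (Rle_or_lt q W); auto.
  assert (W * W < q * q) by (apply Rmult_le_0_lt_compat; lra). lra. Qed.

Lemma time_bound p al ga Y Z s0 s1 y1 dd : 1 < p -> 0 < ga -> ga <= al -> SYS p al ga Y Z s0 s1 -> s0 < s1 ->
  (forall s, s0 <= s < s1 -> 0 < Y s) -> 0 < Z s1 -> Y s1 = 0 ->
  (forall s, s0 <= s <= s1 -> 0 <= Z s) -> Z s0 = 0 ->
  0 < y1 -> 0 < dd -> dd * dd = (p + 1) * (al * ga) / 2 -> Rpower y1 (p - 1) = dd * dd ->
  al - ga <= dd * ((p - 1) / (p + 1)) ->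
  s1 - s0 <= 2 * y1 / sqrt (2 * (P1 p (Y s0) / (p + 1))) + 2 * PI / (dd * ((p - 1) / (p + 1))).
Proof.
  intros Hp Hga Hal HS Hs01 HYp HZ1 HY1 HZp HZ0 Hy1 Hdd Hdd2 Hy1p Hka.
  set (H := Hen p al (al * ga) Y Z).
  set (Y0 := Y s0).
  assert (HY0 : 0 < Y0) by (apply HYp; lra).
  set (e := P1 p Y0 / (p + 1)).
  assert (He : 0 < e).
  { unfold e. apply Rdiv_lt_0_compat; [|lra]. rewrite P1_pos by auto.
    apply Rmult_lt_0_compat. apply Rmult_lt_0_compat; auto. apply Rpower_pos. auto. }
  assert (HH0 : e <= H s0).
  { unfold H, Hen. rewrite HZ0. fold Y0. fold e.
    assert (al * ga * (Y0 * Y0) <= al * al * (Y0 * Y0)).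
    { apply Rmult_le_compat_r. apply Rle_0_sqr. apply Rmult_le_compat_l; lra. }
    replace ((al * Y0 - 0) * (al * Y0 - 0)) with (al * al * (Y0 * Y0)) by ring. lra. }
  destruct (unimodal p al ga Y Z s0 s1 Hp Hga Hal HS Hs01 HYp HZ1 HY1 ltac:(apply Rle_trans with e; [lra| exact HH0]))
    as [sm [Hsm [Hwm [Hasc Hdesc]]]].
  assert (Hsm0 : s0 < sm).
  { destruct (Req_dec s0 sm); [|lra]. subst sm. rewrite HZ0 in Hwm.
    assert (0 < al * Y0) by (apply Rmult_lt_0_compat; lra). unfold Y0 in *. lra. }
  destruct Hasc as [Hasc|Hasc]. lra.
  assert (HDY : forall s, s0 <= s <= s1 -> is_derive Y s (al * Y s - Z s)) by (intros; apply HS; auto).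
  assert (Hmon : forall x y, s0 <= x -> x <= y -> y <= s1 -> H x <= H y)
    by (intros; apply (Hmono p al ga Y Z s0 s1); auto).
  assert (Yasc : forall x y, s0 <= x -> x <= y -> y <= sm -> Y x <= Y y).
  { intros x y Hx Hxy Hy. assert (0 * (y - x) <= Y y - Y x); [|lra].
    apply (mvt_ge Y (fun t => al * Y t - Z t)). lra. intros; apply HDY; lra.
    intros t Ht. assert (Z t - al * Y t <= 0) by (apply Hasc; lra). lra. }
  assert (Ydesc : forall x y, sm <= x -> x <= y -> y <= s1 -> Y y <= Y x).
  { intros x y Hx Hxy Hy. assert (Y y - Y x <= 0 * (y - x)); [|lra].
    apply (mvt_le Y (fun t => al * Y t - Z t)). lra. intros; apply HDY; lra.
    intros t Ht. destruct (Req_dec t sm). subst t; lra.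
    assert (0 < Z t - al * Y t) by (apply Hdesc; lra). lra. }
  set (q := sqrt (2 * e)).
  assert (Hq : 0 < q) by (apply sqrt_lt_R0; lra).
  assert (Hqq : q * q = 2 * e) by (apply sqrt_sqrt; lra).
  assert (RI : forall s, s0 <= s <= s1 -> Y s <= y1 -> q * q <= (al * Y s - Z s) * (al * Y s - Z s)).
  { intros s Hs Hys. assert (Hs' : e <= H s) by (apply Rle_trans with (1 := HH0); apply Hmon; lra).
    unfold H, Hen in Hs'.
    assert (HP : P1 p (Y s) / (p + 1) <= al * ga * (Y s * Y s) / 2).
    { destruct (Req_dec s s1). subst s. rewrite HY1. unfold P1. rewrite Rmult_0_r, Rmult_0_r. lra.
      assert (Hpos : 0 < Y s) by (apply HYp; lra). rewrite P1_pos by auto.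
      assert (Hr : Rpower (Y s) (p - 1) <= (p + 1) * (al * ga) / 2).
      { rewrite <- Hdd2, <- Hy1p. apply Rle_Rpower_l. lra. lra. }
      set (R0 := Rpower (Y s) (p - 1)) in *. set (y := Y s) in *.
      assert (Hyy : 0 <= y * y) by apply Rle_0_sqr.
      assert (E : R0 * y * y / (p + 1) - al * ga * (y * y) / 2 = (y * y) * (R0 - (p + 1) * (al * ga) / 2) / (p + 1))
        by (field; lra).
      assert ((y * y) * (R0 - (p + 1) * (al * ga) / 2) / (p + 1) <= 0).
      { unfold Rdiv. apply Rmult_le_0_r_compat_helper; auto; lra. }
      lra. }
    lra. }
  assert (Hwm0 : Z sm - al * Y sm = 0) by (assert (Z sm - al * Y sm <= 0) by (apply Hasc; lra); lra).
  destruct (Rle_or_lt (Y sm) y1) as [HA|HB].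
  { exfalso. assert (HH := RI sm ltac:(lra) HA).
    replace (al * Y sm - Z sm) with 0 in HH by lra. lra. }
  assert (Hap : exists a', s0 <= a' <= sm /\ a' - s0 <= y1 / q /\ forall t, a' <= t <= sm -> y1 <= Y t).
  { destruct (Rle_or_lt y1 Y0) as [Hc|Hc].
    - exists s0. split. lra. split. replace (s0 - s0) with 0 by ring.
      apply Rlt_le, Rdiv_lt_0_compat; lra.
      intros t Ht. apply Rle_trans with Y0. auto. apply Yasc; lra.
    - destruct (Ranalysis5.IVT_interv (fun t => Y t - y1) s0 sm) as [a' [Ha1 Ha2]].
      { intros a Ha. apply continuity_pt_minus. apply (dcont Y a _ (HDY a ltac:(lra))). apply continuity_pt_const. intros x y; auto. }
      lra. unfold Y0 in Hc; lra. lra.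
      exists a'. split. lra. split.
      + assert (q * (a' - s0) <= Y a' - Y s0).
        { apply (mvt_ge Y (fun t => al * Y t - Z t)). lra. intros; apply HDY; lra.
          intros t Ht. apply sq_ge. lra. apply RI. lra.
          assert (Y t <= Y a') by (apply Yasc; lra). lra.
          assert (Z t - al * Y t <= 0) by (apply Hasc; lra). lra. }
        apply (Rmult_le_reg_l q). auto. replace (q * (y1 / q)) with y1 by (field; lra). fold Y0 in H0. lra.
      + intros t Ht. assert (Y a' <= Y t) by (apply Yasc; lra). lra. }
  destruct Hap as [a' [Ha'1 [Ha'2 Ha'3]]].
  destruct (Ranalysis5.IVT_interv (fun t => y1 - Y t) sm s1) as [a [Ha1 Ha2]].
  { intros x Hx. apply continuity_pt_minus. apply continuity_pt_const. intros u v; auto. apply (dcont Y x _ (HDY x ltac:(lra))). }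
  lra. lra. rewrite HY1; lra.
  assert (Hasm : sm < a). { destruct (Req_dec sm a). subst a; lra. lra. }
  assert (Hdesc_t : s1 - a <= y1 / q).
  { assert (Y s1 - Y a <= (- q) * (s1 - a)).
    { apply (mvt_le Y (fun t => al * Y t - Z t)). lra. intros; apply HDY; lra.
      intros t Ht. assert (0 < Z t - al * Y t) by (apply Hdesc; lra).
      assert (Y t <= Y a) by (apply Ydesc; lra).
      assert (q <= - (al * Y t - Z t)).
      { apply sq_ge. lra. replace (- (al * Y t - Z t) * - (al * Y t - Z t)) with ((al * Y t - Z t) * (al * Y t - Z t)) by ring.
        apply RI; lra. lra. } lra. }
    rewrite HY1 in H0. apply (Rmult_le_reg_l q). auto. replace (q * (y1 / q)) with y1 by (field; lra). lra. }
  assert (HR2 : a - a' <= 2 * PI / (dd * ((p - 1) / (p + 1)))).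
  { apply (ric_time p al ga Y Z s0 s1 a' a y1 dd); auto; try lra.
    intros t Ht. destruct (Rle_or_lt t sm). apply Ha'3; lra.
    assert (Y a <= Y t) by (apply Ydesc; lra). lra. }
  fold Y0 e q. 
  assert (2 * y1 / q = y1 / q + y1 / q) by (field; lra). lra.
Qed.

Lemma gronwall p al ga Y Z s0 s1 : 1 < p -> 0 < ga -> ga <= al -> SYS p al ga Y Z s0 s1 ->
  (forall s, s0 <= s <= s1 -> 0 <= Y s) -> Y s1 = 0 -> 0 <= Hen p al (al * ga) Y Z s0 ->
  forall s, s0 <= s <= s1 ->
  Y s <= sqrt (2 * Hen p al (al * ga) Y Z s1 / (al * ga)) * (exp (sqrt (al * ga) * (s1 - s)) - 1).
Proof.
  intros Hp Hga Hal HS HYp HY1 HH0 s Hs.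
  set (H := Hen p al (al * ga) Y Z).
  set (h := H s1). set (be := al * ga).
  assert (Hbe : 0 < be) by (unfold be; apply Rmult_lt_0_compat; lra).
  assert (Hmon : forall x y, s0 <= x -> x <= y -> y <= s1 -> H x <= H y)
    by (intros; apply (Hmono p al ga Y Z s0 s1); auto).
  assert (Hh : 0 <= h) by (unfold h; apply Rle_trans with (1 := HH0); apply Hmon; lra).
  set (k := sqrt be). set (c0 := sqrt (2 * h / be)).
  assert (Hk : 0 < k) by (apply sqrt_lt_R0; auto).
  assert (Hkk : k * k = be) by (apply sqrt_sqrt; lra).
  assert (Hc0 : 0 <= c0) by apply sqrt_pos.
  assert (Hcc : c0 * c0 = 2 * h / be) by (apply sqrt_sqrt; apply Rdiv_le_0_compat; lra).
  assert (Hkc : (k * c0) * (k * c0) = 2 * h).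
  { replace ((k * c0) * (k * c0)) with ((k * k) * (c0 * c0)) by ring. rewrite Hkk, Hcc. field. lra. }
  set (Q := fun t => (Y t + c0) * exp (k * t)).
  assert (HQ : 0 * (s1 - s) <= Q s1 - Q s).
  { apply (mvt_ge Q (fun t => (al * Y t - Z t) * exp (k * t) + (Y t + c0) * (k * exp (k * t)))). lra.
    - intros t Ht. eapply deq. unfold Q. apply dmul. apply dplus. apply HS; lra. apply dconst.
      apply (dcomp exp (fun t => k * t)). apply dexp.
      apply dscal. apply did. simpl; ring.
    - intros t Ht. set (W := al * Y t - Z t).
      assert (HW : W * W <= 2 * h + be * (Y t * Y t)).
      { assert (Hx0 : H t <= h) by (unfold h; apply Hmon; lra).
        unfold H, Hen in Hx0. fold W in Hx0. fold be in Hx0.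
        assert (0 <= P1 p (Y t) / (p + 1)) by (apply Rdiv_le_0_compat; [apply P1_nonneg|lra]). lra. }
      assert (HY0 : 0 <= Y t) by (apply HYp; lra).
      assert (HL : 0 <= k * Y t + k * c0) by (assert (0 <= k * Y t) by (apply Rmult_le_pos; lra);
        assert (0 <= k * c0) by (apply Rmult_le_pos; lra); lra).
      assert (HW2 : W * W <= (k * Y t + k * c0) * (k * Y t + k * c0)).
      { replace ((k * Y t + k * c0) * (k * Y t + k * c0)) with ((k * k) * (Y t * Y t) + 2 * (k * k) * (Y t * c0) + (k * c0) * (k * c0)) by ring.
        rewrite Hkk, Hkc. assert (0 <= be * (Y t * c0)) by (apply Rmult_le_pos; [lra| apply Rmult_le_pos; lra]). lra. }
      assert (HW3 : - (k * Y t + k * c0) <= W).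
      { destruct (Rle_or_lt (- (k * Y t + k * c0)) W); auto. exfalso.
        assert ((k * Y t + k * c0) * (k * Y t + k * c0) < (- W) * (- W)) by (apply Rmult_le_0_lt_compat; lra). lra. }
      assert (Hexp : 0 < exp (k * t)) by apply exp_pos.
      replace (W * exp (k * t) + (Y t + c0) * (k * exp (k * t))) with ((W + (k * Y t + k * c0)) * exp (k * t)) by ring.
      apply Rmult_le_pos; lra. }
  unfold Q in HQ.
  assert (HYs1 : 0 <= Y s1) by (apply HYp; lra).
  assert (E : exp (k * s1) = exp (k * s) * exp (k * (s1 - s))) by (rewrite <- exp_plus; f_equal; ring).
  rewrite E in HQ.
  assert (Hes : 0 < exp (k * s)) by apply exp_pos.
  assert (Y s + c0 <= (Y s1 + c0) * exp (k * (s1 - s))).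
  { apply (Rmult_le_reg_r (exp (k * s))). auto. lra. }
  rewrite HY1 in H0. fold H h be k c0. lra.
Qed.

Lemma dv_deriv M p (v dv : R -> R) r :
  (forall t, 0 < t < 1 -> is_derive (fun s => Rpower s (M - 1) * dv s) t (- (Rpower t (M - 1) * spow p (v t)))) ->
  0 < r < 1 -> is_derive dv r (- spow p (v r) - (M - 1) / r * dv r).
Proof.
  intros Hd Hr.
  apply is_derive_ext_loc with (f := fun s => (Rpower s (M - 1) * dv s) * Rpower s (- (M - 1))).
  { apply locally_interval with (a := Finite 0) (b := p_infty); simpl; auto. lra.
    intros y Hy _. rewrite Rmult_assoc, (Rmult_comm (dv y)), <- Rmult_assoc, <- Rpower_plus.
    replace (M - 1 + - (M - 1)) with 0 by ring. rewrite Rpower_O by auto. ring. }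
  eapply deq. apply dmul. apply Hd; auto. apply drpow. lra.
  assert (E1 : Rpower r (M - 1) * Rpower r (- (M - 1)) = 1).
  { rewrite <- Rpower_plus. replace (M - 1 + - (M - 1)) with 0 by ring. apply Rpower_O; lra. }
  assert (E2 : Rpower r (M - 1) * Rpower r (- (M - 1) - 1) = / r).
  { rewrite <- Rpower_plus. replace (M - 1 + (- (M - 1) - 1)) with (Ropp 1) by ring.
    rewrite Rpower_Ropp, Rpower_1; lra. }
  cbv beta.
  replace (- (Rpower r (M - 1) * spow p (v r)) * Rpower r (- (M - 1)) +
    Rpower r (M - 1) * dv r * (- (M - 1) * Rpower r (- (M - 1) - 1)))
    with (- spow p (v r) * (Rpower r (M - 1) * Rpower r (- (M - 1))) - (M - 1) * dv r * (Rpower r (M - 1) * Rpower r (- (M - 1) - 1))) by ring.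
  rewrite E1, E2. field. lra.
Qed.

Lemma spow_scale p c w : 0 < c -> spow p (c * w) = Rpower c (p - 1) * c * spow p w.
Proof.
  intros Hc. unfold spow. destruct (Req_dec w 0). subst w. rewrite !Rmult_0_r. ring.
  rewrite Rabs_mult, Rabs_right by lra. rewrite <- Rpower_mult_distr. ring. auto.
  apply Rabs_pos_lt; auto.
Qed.

Lemma spow_sign p sg w : sg * sg = 1 -> spow p (sg * w) = sg * spow p w.
Proof.
  intros Hs. unfold spow. rewrite Rabs_mult.
  assert (Rabs sg = 1). { assert (sg = 1 \/ sg = -1) by (destruct (Rle_or_lt 0 sg); [left|right]; nra).
    destruct H as [->| ->]. apply Rabs_R1. rewrite Rabs_left; lra. }
  rewrite H, Rmult_1_l. ring.
Qed.

Definition Yf (p sg : R) (v : R -> R) (x : R) := sg * (exp (2 / (p - 1) * x) * v (exp x)).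
Definition Zf (p sg : R) (dv : R -> R) (x : R) := - sg * (exp ((2 / (p - 1) + 1) * x) * dv (exp x)).

Lemma sys_of_v M p sg (v dv : R -> R) s0 s1 : 1 < p -> sg * sg = 1 -> s1 < 0 ->
  (forall t, 0 < t < 1 -> is_derive v t (dv t)) ->
  (forall t, 0 < t < 1 -> is_derive (fun s => Rpower s (M - 1) * dv s) t (- (Rpower t (M - 1) * spow p (v t)))) ->
  SYS p (2 / (p - 1)) (M - 2 - 2 / (p - 1)) (Yf p sg v) (Zf p sg dv) s0 s1.
Proof.
  intros Hp Hsg Hs1 Hv Hdv s Hs.
  set (al := 2 / (p - 1)).
  assert (He : 0 < exp s < 1). { split. apply exp_pos. rewrite <- exp_0. apply exp_increasing. lra. }
  assert (Hvc : is_derive (fun x => v (exp x)) s (exp s * dv (exp s))).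
  { apply (dcomp v exp s). apply Hv; auto. apply dexp. }
  assert (Hdvc : is_derive (fun x => dv (exp x)) s (exp s * (- spow p (v (exp s)) - (M - 1) / exp s * dv (exp s)))).
  { apply (dcomp dv exp s). apply dv_deriv; auto. apply dexp. }
  assert (Hea : forall c, is_derive (fun x => exp (c * x)) s (c * exp (c * s))).
  { intros c. eapply deq. apply (dcomp exp (fun x => c * x)). apply dexp.
    apply (dscal (fun x => x) c s 1). apply did. simpl; ring. }
  assert (Eexp : forall a b, exp (a * s) * exp (b * s) = exp ((a + b) * s)).
  { intros. rewrite <- exp_plus. f_equal. ring. }
  split.
  - unfold Yf, Zf. fold al. eapply deq. apply dscal. apply dmul. apply Hea. apply Hvc. cbv beta.
    replace (exp (al * s) * (exp s * dv (exp s))) with ((exp (al * s) * exp (1 * s)) * dv (exp s))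
      by (rewrite Rmult_1_l; ring).
    rewrite Eexp. ring.
  - unfold Yf, Zf. fold al.
    eapply deq. apply dscal. apply dmul. apply Hea. apply Hdvc. cbv beta.
    rewrite spow_sign by auto. rewrite spow_scale by apply exp_pos.
    assert (Ep : Rpower (exp (al * s)) (p - 1) = exp (2 * s)).
    { unfold Rpower. rewrite ln_exp. f_equal. unfold al. field. lra. }
    rewrite Ep.
    replace (exp ((al + 1) * s) * (exp s * (- spow p (v (exp s)) - (M - 1) / exp s * dv (exp s))))
      with ((exp ((al + 1) * s) * exp (1 * s)) * (- spow p (v (exp s))) - (M - 1) * exp ((al + 1) * s) * dv (exp s))
      by (rewrite Rmult_1_l; field; lra).
    rewrite Eexp. rewrite (Rmult_comm (exp (2 * s))), Eexp.
    replace (al + 1 + 1) with (al + 2) by ring. replace (al + 2) with (al + 2) by ring.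
    replace (2 + al) with (al + 2) by ring. ring.
Qed.

Lemma tmono m (t : nat -> R) : (forall k, (k < m)%nat -> t k < t (S k)) ->
  forall j k, (j < k)%nat -> (k <= m)%nat -> t j < t k.
Proof.
  intros Ht j k. induction k; intros Hjk Hkm. lia.
  destruct (Nat.eq_dec j k). subst. apply Ht; lia.
  apply Rlt_trans with (t k). apply IHk; lia. apply Ht; lia.
Qed.

Lemma tmono_le m (t : nat -> R) : (forall k, (k < m)%nat -> t k < t (S k)) ->
  forall j k, (j <= k)%nat -> (k <= m)%nat -> t j <= t k.
Proof.
  intros Ht j k Hjk Hkm. destruct (Nat.eq_dec j k). subst; lra. left; apply (tmono m); auto; lia.
Qed.

Lemma zone_facts m i (v : R -> R) (t : nat -> R) : (1 <= i)%nat -> (i <= m - 1)%nat -> (2 <= m)%nat ->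
  nodal_zeros m v t ->
  0 <= t (i - 1)%nat /\ t (i - 1)%nat < t i /\ 0 < t i /\ t i < 1 /\ v (t i) = 0 /\
  (forall x, t (i - 1)%nat < x < t i -> v x <> 0).
Proof.
  intros Hi1 Hi2 Hm [H0 [Hm1 [Hinc Hz]]].
  assert (A1 : 0 <= t (i - 1)%nat) by (rewrite <- H0; apply (tmono_le m); auto; lia).
  assert (A2 : t (i - 1)%nat < t i) by (apply (tmono m); auto; lia).
  assert (A3 : t i < 1) by (rewrite <- Hm1; apply (tmono m); auto; lia).
  split. auto. split. auto. split. lra. split. auto. split.
  - apply Hz. lra. exists i. split. lia. auto.
  - intros x Hx Hv. apply Hz in Hv; [|lra]. destruct Hv as [k [Hk Hxk]]. subst x.
    destruct (Compare_dec.le_lt_dec k (i - 1)).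
    + assert (t k <= t (i - 1)%nat) by (apply (tmono_le m); auto; lia). lra.
    + assert (t i <= t k) by (apply (tmono_le m); auto; lia). lra.
Qed.

Lemma zone_sign (v : R -> R) (lo hi : R) : 0 <= lo -> lo < hi -> hi < 1 ->
  (forall x, 0 < x < 1 -> continuity_pt v x) ->
  (forall x, lo < x < hi -> v x <> 0) ->
  exists sg, sg * sg = 1 /\ forall x, lo < x < hi -> 0 < sg * v x.
Proof.
  intros H0 Hlh Hh1 Hc Hnz.
  set (c := (lo + hi) / 2).
  assert (Hc1 : lo < c < hi) by (unfold c; lra).
  assert (same : forall x, lo < x < hi -> 0 < v x * v c).
  { intros x Hx. destruct (Rtotal_order (v x * v c) 0) as [Hn|[Hz|Hp]]; auto.
    - exfalso. set (a := Rmin x c). set (b := Rmax x c).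
      assert (lo < a) by (unfold a; apply Rmin_glb_lt; lra).
      assert (b < hi) by (unfold b; apply Rmax_lub_lt; lra).
      assert (Hab : a <= b) by (unfold a, b; apply Rle_trans with x; [apply Rmin_l|apply Rmax_l]).
      destruct (Rle_lt_or_eq_dec _ _ Hab) as [Hab'|Hab'].
      2: { assert (x = c). { unfold a, b in Hab'. destruct (Rle_or_lt x c).
             rewrite Rmin_left, Rmax_right in Hab' by lra. auto.
             rewrite Rmin_right, Rmax_left in Hab' by lra. auto. }
           subst x. nra. }
      assert (Hprod : v a * v b < 0).
      { unfold a, b. destruct (Rle_or_lt x c).
        rewrite Rmin_left, Rmax_right by lra. auto.
        rewrite Rmin_right, Rmax_left by lra. rewrite Rmult_comm; auto. }
      assert (Hcont : forall y, a <= y <= b -> continuity_pt v y) by (intros; apply Hc; lra).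
      destruct (Rlt_or_le (v a) 0) as [Hva|Hva].
      + assert (0 < v b) by nra.
        destruct (Ranalysis5.IVT_interv v a b Hcont Hab' Hva H2) as [z [Hz1 Hz2]].
        apply (Hnz z). lra. auto.
      + assert (v b < 0) by nra.
        destruct (Ranalysis5.IVT_interv (fun y => - v y) a b) as [z [Hz1 Hz2]].
        { intros y Hy. apply continuity_pt_opp. apply Hcont; auto. }
        auto. assert (v a <> 0) by (intro; rewrite H3 in Hprod; lra). lra. lra.
        apply (Hnz z). lra. lra.
    - exfalso. apply Rmult_integral in Hz. destruct Hz as [Hz|Hz].
      apply (Hnz x); auto. apply (Hnz c); auto. }
  destruct (Rlt_or_le 0 (v c)) as [Hvc|Hvc].
  - exists 1. split. ring. intros x Hx. specialize (same x Hx). rewrite Rmult_1_l. nra.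
  - exists (-1). split. ring. intros x Hx. specialize (same x Hx).
    assert (v c <> 0) by (apply Hnz; auto). nra.
Qed.

Lemma lim_right0 (f : R -> R) l : filterlim f (at_right 0) (locally l) ->
  forall eps, 0 < eps -> exists d, 0 < d /\ forall x, 0 < x < d -> Rabs (f x - l) < eps.
Proof.
  intros Hf eps He. apply filterlim_locally with (eps := mkposreal eps He) in Hf.
  destruct Hf as [d Hd]. exists d. split. apply cond_pos.
  intros x Hx. apply (Hd x). unfold ball; simpl; unfold AbsRing_ball; simpl.
  unfold abs, minus, plus, opp; simpl. rewrite Ropp_0, Rplus_0_r, Rabs_right; lra. lra.
Qed.

Lemma Rabs_sg sg : sg * sg = 1 -> Rabs sg = 1.
Proof. intros Hs. assert (sg = 1 \/ sg = -1) by (destruct (Rle_or_lt 0 sg); [left|right]; nra).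
  destruct H as [->| ->]. apply Rabs_R1. rewrite Rabs_left; lra. Qed.

Lemma flux_sign M p (v dv : R -> R) sg lo sig a : 1 < M -> 1 < p ->
  (forall t, 0 < t < 1 -> is_derive (fun s => Rpower s (M - 1) * dv s) t (- (Rpower t (M - 1) * spow p (v t)))) ->
  0 <= lo -> lo < a -> a < 1 -> lo <= sig -> sig < a -> sg * sg = 1 ->
  (forall x, lo < x < a -> 0 < sg * v x) ->
  ((sig = 0 /\ lo = 0 /\ filterlim dv (at_right 0) (locally 0)) \/ (lo < sig /\ dv sig = 0)) ->
  forall r, sig < r <= a -> sg * dv r < 0.
Proof.
  intros HM Hp Hd Hlo Hla Ha1 Hls Hsa Hsg Hpos Hcase.
  set (G := fun r => sg * (Rpower r (M - 1) * dv r)).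
  assert (HG : forall r, 0 < r < 1 -> is_derive G r (- (Rpower r (M - 1) * spow p (sg * v r)))).
  { intros r Hr. eapply deq. apply dscal. apply Hd; auto. rewrite spow_sign by auto. ring. }
  assert (Hstrict : forall x y, lo < x -> x < y -> y <= a -> G y < G x).
  { intros x y Hx Hxy Hy.
    assert (- G x < - G y); [|lra].
    apply (mvt_gt (fun r => - G r) (fun r => Rpower r (M - 1) * spow p (sg * v r))). auto.
    - intros r Hr. eapply deq. apply (is_derive_opp G). apply HG. lra. simpl. unfold opp; simpl. ring.
    - intros r Hr. apply Rmult_lt_0_compat. apply Rpower_pos.
      assert (0 < sg * v r) by (apply Hpos; lra). rewrite spow_pos by auto.
      apply Rmult_lt_0_compat; auto. apply Rpower_pos. }
  assert (HGneg : forall r, sig < r <= a -> G r < 0).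
  { destruct Hcase as [[Hs0 [Hl0 Hlim]]|[Hls' Hds]].
    - assert (Hle : forall y, 0 < y <= a -> G y <= 0).
      { intros y Hy. destruct (Rle_or_lt (G y) 0) as [Hg|Hg]; auto. exfalso.
        destruct (lim_right0 dv 0 Hlim (G y) Hg) as [d [Hd0 Hd1]].
        set (x := Rmin d y / 2).
        assert (Hx0 : 0 < x) by (unfold x; apply Rdiv_lt_0_compat; [apply Rmin_pos; lra|lra]).
        assert (Rmin d y <= d) by apply Rmin_l. assert (Rmin d y <= y) by apply Rmin_r.
        assert (Hxy : x < y) by (unfold x; lra).
        assert (Hxe : x = Rmin d y / 2) by reflexivity.
        assert (Hdx : Rabs (dv x - 0) < G y) by (apply Hd1; split; lra).
        assert (G y < G x) by (apply Hstrict; lra).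
        assert (G x <= Rabs (dv x)).
        { unfold G. rewrite <- Rmult_assoc. apply Rle_trans with (Rabs (sg * Rpower x (M - 1) * dv x)).
          apply Rle_abs. rewrite Rabs_mult. rewrite Rabs_mult.
          rewrite (Rabs_sg sg Hsg), Rmult_1_l. rewrite Rabs_right by (left; apply Rpower_pos).
          assert (Rpower x (M - 1) <= 1) by (apply Rpower_le1; lra).
          assert (0 <= Rabs (dv x)) by apply Rabs_pos. nra. }
        rewrite Rminus_0_r in Hdx. lra. }
      intros r Hr. assert (G r < G (r / 2)) by (apply Hstrict; lra).
      assert (G (r / 2) <= 0) by (apply Hle; lra). lra.
    - intros r Hr. assert (G r < G sig) by (apply Hstrict; lra).
      unfold G at 2 in H. rewrite Hds, Rmult_0_r, Rmult_0_r in H. auto. }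
  intros r Hr. specialize (HGneg r Hr). unfold G in HGneg.
  assert (0 < Rpower r (M - 1)) by apply Rpower_pos.
  replace (sg * (Rpower r (M - 1) * dv r)) with (Rpower r (M - 1) * (sg * dv r)) in HGneg by ring.
  destruct (Rlt_or_le (sg * dv r) 0); auto. nra.
Qed.

Lemma exp_small c eta x : 0 < c -> 0 < eta -> x <= ln eta / c -> exp (c * x) <= eta.
Proof.
  intros Hc He Hx. rewrite <- (exp_ln eta) by auto. apply exp_le.
  apply (Rmult_le_compat_l c) in Hx; [|lra]. replace (c * (ln eta / c)) with (ln eta) in Hx by (field; lra). lra.
Qed.

Lemma YZ_small p sg (v dv : R -> R) : 1 < p -> sg * sg = 1 ->
  filterlim v (at_right 0) (locally (v 0)) -> filterlim dv (at_right 0) (locally 0) ->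
  forall eta, 0 < eta -> exists X, forall x, x <= X ->
    Rabs (Yf p sg v x) <= eta /\ Rabs (Zf p sg dv x) <= eta.
Proof.
  intros Hp Hsg Hv Hdv eta He.
  set (al := 2 / (p - 1)).
  assert (Hal : 0 < al) by (unfold al; apply Rdiv_lt_0_compat; lra).
  destruct (lim_right0 v (v 0) Hv 1 ltac:(lra)) as [d1 [Hd1 Hv1]].
  destruct (lim_right0 dv 0 Hdv 1 ltac:(lra)) as [d2 [Hd2 Hv2]].
  set (V := Rabs (v 0) + 1).
  assert (HV : 0 < V) by (unfold V; assert (0 <= Rabs (v 0)) by apply Rabs_pos; lra).
  exists (Rmin (Rmin (ln d1 - 1) (ln d2 - 1)) (Rmin (ln (eta / V) / al) (ln eta / (al + 1)))).
  intros x Hx.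
  assert (Hx1 : x <= ln d1 - 1) by (eapply Rle_trans; [exact Hx|]; eapply Rle_trans; [apply Rmin_l|apply Rmin_l]).
  assert (Hx2 : x <= ln d2 - 1) by (eapply Rle_trans; [exact Hx|]; eapply Rle_trans; [apply Rmin_l|apply Rmin_r]).
  assert (Hx3 : x <= ln (eta / V) / al) by (eapply Rle_trans; [exact Hx|]; eapply Rle_trans; [apply Rmin_r|apply Rmin_l]).
  assert (Hx4 : x <= ln eta / (al + 1)) by (eapply Rle_trans; [exact Hx|]; eapply Rle_trans; [apply Rmin_r|apply Rmin_r]).
  assert (He1 : 0 < exp x < d1). { split. apply exp_pos. rewrite <- (exp_ln d1) by auto. apply exp_increasing. lra. }
  assert (He2 : 0 < exp x < d2). { split. apply exp_pos. rewrite <- (exp_ln d2) by auto. apply exp_increasing. lra. }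
  specialize (Hv1 (exp x) He1). specialize (Hv2 (exp x) He2).
  assert (HvV : Rabs (v (exp x)) <= V).
  { unfold V. assert (Rabs (v (exp x)) <= Rabs (v (exp x) - v 0) + Rabs (v 0)).
    { replace (v (exp x)) with ((v (exp x) - v 0) + v 0) at 1 by ring. apply Rabs_triang. } lra. }
  rewrite Rminus_0_r in Hv2.
  unfold Yf, Zf. fold al. split.
  - rewrite !Rabs_mult, Rabs_sg by auto. rewrite Rabs_right by (left; apply exp_pos).
    assert (exp (al * x) <= eta / V) by (apply exp_small; auto; apply Rdiv_lt_0_compat; auto).
    assert (0 <= Rabs (v (exp x))) by apply Rabs_pos.
    assert (exp (al * x) * Rabs (v (exp x)) <= eta / V * V).
    { apply Rmult_le_compat; auto. left; apply exp_pos. }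
    replace (eta / V * V) with eta in H1 by (field; lra). lra.
  - rewrite !Rabs_mult, Rabs_Ropp, Rabs_sg by auto. rewrite Rabs_right by (left; apply exp_pos).
    assert (exp ((al + 1) * x) <= eta) by (apply exp_small; auto; lra).
    assert (0 <= Rabs (dv (exp x))) by apply Rabs_pos.
    assert (exp ((al + 1) * x) * Rabs (dv (exp x)) <= eta * 1).
    { apply Rmult_le_compat; auto. left; apply exp_pos. lra. } lra.
Qed.

Lemma Rpower0_base c : Rpower 0 c = 1.
Proof. unfold Rpower. replace (ln 0) with 0. rewrite Rmult_0_r. apply exp_0.
  unfold ln. destruct (Rlt_dec 0 0); [exfalso; lra|reflexivity]. Qed.

Lemma Hen_small p al be (Y Z : R -> R) x eta : 1 < p -> 0 <= al -> 0 <= be -> 0 <= eta <= 1 ->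
  Rabs (Y x) <= eta -> Rabs (Z x) <= eta ->
  Rabs (Hen p al be Y Z x) <= ((al + 1) * (al + 1) + be + 1) * (eta * eta).
Proof.
  intros Hp Hal Hbe He HY HZ. unfold Hen.
  set (y := Y x) in *. set (z := Z x) in *.
  assert (sq : forall a b, Rabs a <= b -> a * a <= b * b).
  { intros a b Hab. assert (0 <= b) by (apply Rle_trans with (Rabs a); [apply Rabs_pos|auto]).
    apply (Rsqr_le_abs_1 a b). rewrite (Rabs_right b) by lra. auto. }
  assert (Hy2 : y * y <= eta * eta) by (apply sq; auto).
  assert (Hw : (al * y - z) * (al * y - z) <= ((al + 1) * eta) * ((al + 1) * eta)).
  { apply sq. eapply Rle_trans. apply Rabs_triang. rewrite Rabs_Ropp, Rabs_mult, Rabs_right by lra.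
    assert (al * Rabs y <= al * eta) by (apply Rmult_le_compat_l; lra). lra. }
  assert (HP : 0 <= P1 p y <= y * y).
  { split. apply P1_nonneg. unfold P1. rewrite Rmult_assoc.
    assert (Rpower (Rabs y) (p - 1) <= 1).
    { destruct (Req_dec y 0). rewrite H, Rabs_R0. rewrite Rpower0_base. lra.
      apply Rpower_le1. split. apply Rabs_pos_lt; auto. lra. lra. }
    assert (0 <= y * y) by apply Rle_0_sqr.
    assert (Rpower (Rabs y) (p - 1) * (y * y) <= 1 * (y * y)) by (apply Rmult_le_compat_r; auto). lra. }
  assert (Hbe2 : be * (y * y) <= be * (eta * eta)) by (apply Rmult_le_compat_l; auto).
  assert (HP2 : P1 p y / (p + 1) <= P1 p y).
  { unfold Rdiv. rewrite <- (Rmult_1_r (P1 p y)) at 2. apply Rmult_le_compat_l. lra.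
    rewrite <- Rinv_1. apply Rinv_le_contravar; lra. }
  assert (HP3 : 0 <= P1 p y / (p + 1)) by (apply Rdiv_le_0_compat; lra).
  assert (Hww : 0 <= (al * y - z) * (al * y - z)) by apply Rle_0_sqr.
  assert (Hyy : 0 <= y * y) by apply Rle_0_sqr.
  assert (Hee : 0 <= eta * eta) by apply Rle_0_sqr.
  replace (((al + 1) * eta) * ((al + 1) * eta)) with ((al + 1) * (al + 1) * (eta * eta)) in Hw by ring.
  assert (0 <= be * (eta * eta)) by (apply Rmult_le_pos; lra).
  assert (0 <= (al + 1) * (al + 1) * (eta * eta)) by (apply Rmult_le_pos; [apply Rle_0_sqr|lra]).
  apply Rabs_le. split.
  - lra.
  - replace (((al+1)*(al+1) + be + 1) * (eta*eta)) with ((al+1)*(al+1)*(eta*eta) + be*(eta*eta) + eta*eta) by ring. assert (0 <= be * (y * y)) by (apply Rmult_le_pos; lra). lra.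
Qed.

Lemma h_bound p al ga Y Z s0 s1 B : 1 < p -> 0 < ga -> ga <= al -> SYS p al ga Y Z s0 s1 -> s0 < s1 ->
  (forall s, s0 <= s < s1 -> 0 < Y s) -> 0 < Z s1 -> Y s1 = 0 ->
  (forall s, s0 <= s <= s1 -> 0 <= Z s) -> 0 <= Hen p al (al * ga) Y Z s0 ->
  Hen p al (al * ga) Y Z s0 <= 1 -> al - ga <= 1 / 2 -> 1 <= B ->
  (p + 1) * (1 + al * ga / 2 + (al - ga) * al) < Rpower B (p - 1) ->
  Hen p al (al * ga) Y Z s1 <= 2 * Hen p al (al * ga) Y Z s0 + (al - ga) * (2 * al + 1 + al * ga) * (B * B).
Proof.
  intros Hp Hga Hal HS Hs01 HYp HZ1 HY1 HZp HH0 HH1 Hka HB HBp.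
  destruct (gain p al ga Y Z s0 s1 Hp Hga Hal HS Hs01 HYp HZ1 HY1 HZp HH0) as [Ym [HYm0 [_ [Hg1 Hg2]]]].
  assert (Hh : 0 <= Hen p al (al * ga) Y Z s1).
  { apply Rle_trans with (1 := HH0). apply (Hmono p al ga Y Z s0 s1); auto; lra. }
  set (E0 := Hen p al (al * ga) Y Z s0) in *. set (h := Hen p al (al * ga) Y Z s1) in *.
  set (ka := al - ga) in *. set (be := al * ga) in *.
  assert (Hbe : 0 < be) by (unfold be; apply Rmult_lt_0_compat; lra).
  assert (Hka0 : 0 <= ka) by (unfold ka; lra).
  clearbody ka be.
  assert (HYmB : Ym <= B).
  { destruct (Rle_or_lt Ym B) as [H|H]; auto. exfalso.
    assert (HY1' : 1 < Ym) by lra.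
    assert (HYY : 1 <= Ym * Ym) by nra.
    rewrite P1_pos in Hg1 by lra.
    set (R0 := Rpower Ym (p - 1)) in *.
    assert (HR0 : Rpower B (p - 1) <= R0) by (apply Rle_Rpower_l; lra).
    assert (R0 * (Ym * Ym) <= (p + 1) * (1 + be / 2 + ka * al) * (Ym * Ym)).
    { assert (E : R0 * Ym * Ym / (p + 1) * (p + 1) = R0 * (Ym * Ym)) by (field; lra).
      assert (R0 * Ym * Ym / (p + 1) <= E0 + ka * al * (Ym * Ym) + be * (Ym * Ym) / 2) by lra.
      assert (E0 <= Ym * Ym) by lra.
      assert (0 <= ka * al * (Ym * Ym)) by (apply Rmult_le_pos; [apply Rmult_le_pos; lra| lra]).
      assert (R0 * Ym * Ym / (p + 1) <= (1 + be / 2 + ka * al) * (Ym * Ym)).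
      { assert (Eq : (1 + be / 2 + ka * al) * (Ym * Ym) = Ym * Ym + ka * al * (Ym * Ym) + be * (Ym * Ym) / 2). field. lra. }
      apply (Rmult_le_compat_r (p + 1)) in H3; [|lra]. rewrite E in H3.
      replace ((p + 1) * (1 + be / 2 + ka * al) * (Ym * Ym)) with ((1 + be / 2 + ka * al) * (Ym * Ym) * (p + 1)) by field. lra. }
    assert (R0 <= (p + 1) * (1 + be / 2 + ka * al)).
    { apply (Rmult_le_reg_r (Ym * Ym)). lra. lra. }
    lra. }
  set (SS := sqrt (2 * h + be * (Ym * Ym))) in *.
  assert (HSS : SS * SS = 2 * h + be * (Ym * Ym)).
  { unfold SS. apply sqrt_sqrt. assert (0 <= be * (Ym * Ym)) by (apply Rmult_le_pos; [lra|apply Rle_0_sqr]). lra. }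
  assert (HYS : Ym * SS <= (Ym * Ym + SS * SS) / 2).
  { assert (0 <= (Ym - SS) * (Ym - SS)) by apply Rle_0_sqr. lra. }
  assert (Hk : ka * (Ym * SS) <= ka * ((Ym * Ym + SS * SS) / 2)) by (apply Rmult_le_compat_l; auto).
  rewrite HSS in Hk.
  assert (Hyy : Ym * Ym <= B * B) by (apply Rmult_le_compat; lra).
  assert (h * (1 - ka) <= E0 + ka * al * (Ym * Ym) + ka * (1 + be) * (Ym * Ym) / 2).
  { replace (ka * Ym * SS) with (ka * (Ym * SS)) in Hg2 by field.
    replace (ka * ((Ym * Ym + (2 * h + be * (Ym * Ym))) / 2)) with (ka * h + ka * (1 + be) * (Ym * Ym) / 2) in Hk by field.
    lra. }
  assert (h <= 2 * (E0 + ka * al * (Ym * Ym) + ka * (1 + be) * (Ym * Ym) / 2)).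
  { assert (h * (1/2) <= h * (1 - ka)) by (apply Rmult_le_compat_l; lra). lra. }
  assert (ka * (2 * al + 1 + be) * (Ym * Ym) <= ka * (2 * al + 1 + be) * (B * B)).
  { apply Rmult_le_compat_l; auto. apply Rmult_le_pos. auto. lra. }
  replace (2 * (E0 + ka * al * (Ym * Ym) + ka * (1 + be) * (Ym * Ym) / 2)) with
    (2 * E0 + ka * (2 * al + 1 + be) * (Ym * Ym)) in H1 by field.
  lra.
Qed.

Definition plo M := 1 + 8 / (3 * (M - 2)).
Definition alhi M := 3 * (M - 2) / 4.
Definition belo M := (M - 2) * (M - 2) / 8.
Definition cclo M := (plo M - 1) / (pM M + 1).
Definition ddlo M := sqrt (belo M).
Definition ybar M := Rpower ((pM M + 1) * (alhi M * alhi M) / 2 + 1) (1 / (plo M - 1)).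
Definition Bbar M := Rpower ((pM M + 1) * (1 + alhi M * alhi M / 2 + alhi M * alhi M) + 1) (1 / (plo M - 1)).
Definition ell delta := - ln (1 - delta).
Definition Kf M delta := exp (2 * alhi M * ell delta).
Definition hstar M delta eps := Rmin 1 (belo M * ((eps / Kf M delta) * (eps / Kf M delta)) / 4).
Definition kstar M delta eps := Rmin (Rmin (1 / 2) (ddlo M * cclo M))
  (hstar M delta eps / (4 * (2 * alhi M + 1 + alhi M * alhi M) * (Bbar M * Bbar M) + 8 * alhi M)).
Definition qstar M delta eps := sqrt (Rmin (hstar M delta eps / 8) (1 / (pM M + 1))).
Definition Lstar M delta eps := 2 * ybar M / qstar M delta eps + 2 * PI / (ddlo M * cclo M) + 1 + ell delta.

Lemma pM_eq M : 2 < M -> pM M - 1 = 4 / (M - 2).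
Proof. intros. unfold pM. field. lra. Qed.

Lemma params M p : 2 < M -> plo M <= p <= pM M ->
  1 < p /\ (M - 2) / 2 <= 2 / (p - 1) /\ 2 / (p - 1) <= alhi M /\ plo M < pM M.
Proof.
  intros HM [H1 H2]. assert (E := pM_eq M HM). unfold plo in *.
  assert (0 < 8 / (3 * (M - 2))) by (apply Rdiv_lt_0_compat; lra).
  assert (8 / (3 * (M - 2)) < 4 / (M - 2)).
  { apply (Rmult_lt_reg_r (3 * (M - 2))). lra. field_simplify; lra. }
  split. lra. split.
  - apply (Rmult_le_reg_r (p - 1)). lra. replace (2 / (p - 1) * (p - 1)) with 2 by (field; lra).
    assert (p - 1 <= 4 / (M - 2)) by lra.
    apply (Rmult_le_compat_l ((M - 2) / 2)) in H3; [|lra].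
    replace ((M - 2) / 2 * (4 / (M - 2))) with 2 in H3 by (field; lra). lra.
  - split. 2: lra. unfold alhi.
    apply (Rmult_le_reg_r (p - 1)). lra. replace (2 / (p - 1) * (p - 1)) with 2 by (field; lra).
    assert (8 / (3 * (M - 2)) <= p - 1) by lra.
    apply (Rmult_le_compat_l (3 * (M - 2) / 4)) in H3; [|lra].
    replace (3 * (M - 2) / 4 * (8 / (3 * (M - 2)))) with 2 in H3 by (field; lra). lra.
Qed.

Lemma consts_pos M delta eps : 2 < M -> 0 < delta < 1 -> 0 < eps ->
  0 < alhi M /\ 0 < belo M /\ 0 < cclo M /\ 0 < ddlo M /\ 0 < ell delta /\ 0 < Kf M delta /\
  0 < hstar M delta eps /\ hstar M delta eps <= 1 /\ 1 <= Bbar M /\ 0 < ybar M /\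
  0 < kstar M delta eps /\ 0 < qstar M delta eps.
Proof.
  intros HM Hd He.
  assert (Hp := params M (pM M) HM).
  assert (Hpl : plo M < pM M).
  { unfold plo. rewrite <- (Rplus_0_l (pM M)) at 1. assert (E := pM_eq M HM).
    assert (8 / (3 * (M - 2)) < 4 / (M - 2)).
    { apply (Rmult_lt_reg_r (3 * (M - 2))). lra. field_simplify; lra. } lra. }
  assert (Hpl1 : 1 < plo M) by (unfold plo; assert (0 < 8 / (3 * (M - 2))) by (apply Rdiv_lt_0_compat; lra); lra).
  assert (HpM : 1 < pM M) by lra.
  assert (A1 : 0 < alhi M) by (unfold alhi; lra).
  assert (A2 : 0 < belo M) by (unfold belo; assert (0 < (M - 2) * (M - 2)) by (apply Rmult_lt_0_compat; lra); lra).
  assert (A3 : 0 < cclo M) by (unfold cclo; apply Rdiv_lt_0_compat; lra).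
  assert (A4 : 0 < ddlo M) by (unfold ddlo; apply sqrt_lt_R0; auto).
  assert (A5 : 0 < ell delta).
  { unfold ell. assert (ln (1 - delta) < 0) by (rewrite <- ln_1; apply ln_increasing; lra). lra. }
  assert (A6 : 0 < Kf M delta) by (unfold Kf; apply exp_pos).
  assert (A7 : 0 < hstar M delta eps).
  { unfold hstar. apply Rmin_pos. lra. apply Rdiv_lt_0_compat; [|lra]. apply Rmult_lt_0_compat. auto.
    assert (0 < eps / Kf M delta) by (apply Rdiv_lt_0_compat; auto). apply Rmult_lt_0_compat; auto. }
  assert (A8 : hstar M delta eps <= 1) by (unfold hstar; apply Rmin_l).
  assert (A9 : 1 <= Bbar M).
  { unfold Bbar. set (X := (pM M + 1) * (1 + alhi M * alhi M / 2 + alhi M * alhi M) + 1).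
    assert (HX : 1 <= X). { unfold X. assert (0 <= (pM M + 1) * (1 + alhi M * alhi M / 2 + alhi M * alhi M)).
      { apply Rmult_le_pos. lra. assert (0 <= alhi M * alhi M) by apply Rle_0_sqr. lra. } lra. }
    assert (Rpower X 0 <= Rpower X (1 / (plo M - 1))).
    { apply Rle_Rpower. auto. left; apply Rdiv_lt_0_compat; lra. }
    rewrite Rpower_O in H by lra. auto. }
  assert (A10 : 0 < ybar M) by (unfold ybar; apply Rpower_pos).
  assert (A11 : 0 < kstar M delta eps).
  { unfold kstar. apply Rmin_pos. apply Rmin_pos. lra. apply Rmult_lt_0_compat; auto.
    apply Rdiv_lt_0_compat; auto.
    assert (0 <= 4 * (2 * alhi M + 1 + alhi M * alhi M) * (Bbar M * Bbar M)).
    { apply Rmult_le_pos. assert (0 <= alhi M * alhi M) by apply Rle_0_sqr. lra. apply Rle_0_sqr. } lra. }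
  assert (A12 : 0 < qstar M delta eps).
  { unfold qstar. apply sqrt_lt_R0. apply Rmin_pos. lra. apply Rdiv_lt_0_compat; lra. }
  repeat split; auto.
Qed.

Lemma pbounds M p : 2 < M -> plo M <= p <= pM M ->
  let al := 2 / (p - 1) in let ga := M - 2 - al in
  1 < p /\ 0 < ga /\ ga <= al /\ al <= alhi M /\ belo M <= al * ga /\ al * ga <= alhi M * alhi M /\
  al - ga = 4 / (p - 1) - (M - 2) /\ 0 < al.
Proof.
  intros HM Hp al ga. destruct (params M p HM Hp) as [H1 [H2 [H3 H4]]].
  fold al in H2, H3.
  assert (Hga : (M - 2) / 4 <= ga) by (unfold ga, alhi in *; lra).
  assert (0 < (M - 2) / 4) by lra.
  split. auto. split. lra. split. unfold ga; lra. split. auto. split.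
  - unfold belo. replace ((M - 2) * (M - 2) / 8) with (((M - 2) / 2) * ((M - 2) / 4)) by field.
    apply Rmult_le_compat; lra.
  - split. apply Rmult_le_compat; try lra. unfold ga; lra.
    split. unfold ga, al. field. lra. lra.
Qed.

Lemma finish M p sg (v dv : R -> R) a s0 delta eps :
  2 < M -> plo M <= p < pM M -> 0 < delta < 1 -> 0 < eps ->
  4 / (p - 1) - (M - 2) <= kstar M delta eps -> sg * sg = 1 ->
  0 < a < 1 -> s0 < ln a -> s0 <= ln a - ell delta ->
  SYS p (2 / (p - 1)) (M - 2 - 2 / (p - 1)) (Yf p sg v) (Zf p sg dv) s0 (ln a) ->
  (forall x, s0 <= x < ln a -> 0 < Yf p sg v x) -> v a = 0 ->
  (forall x, s0 <= x <= ln a -> 0 <= Zf p sg dv x) -> 0 < Zf p sg dv (ln a) ->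
  0 <= Hen p (2 / (p - 1)) (2 / (p - 1) * (M - 2 - 2 / (p - 1))) (Yf p sg v) (Zf p sg dv) s0 ->
  Hen p (2 / (p - 1)) (2 / (p - 1) * (M - 2 - 2 / (p - 1))) (Yf p sg v) (Zf p sg dv) s0 <= hstar M delta eps / 8 ->
  forall r, 1 - delta <= r <= 1 -> Rabs (Rpower a (2 / (p - 1)) * v (a * r)) < eps.
Proof.
  intros HM Hp Hd He Hk Hsg Ha Hs01 Hs0l HS HYp Hva HZp HZ1 HE0 HE1 r Hr.
  destruct (consts_pos M delta eps HM Hd He) as [C1 [C2 [C3 [C4 [C5 [C6 [C7 [C8 [C9 [C10 [C11 C12]]]]]]]]]]].
  destruct (pbounds M p HM ltac:(lra)) as [P1' [P2 [P3 [P4 [P5 [P6 [P7 P8]]]]]]].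
  set (al := 2 / (p - 1)) in *. set (ga := M - 2 - al) in *.
  set (Y := Yf p sg v) in *. set (Z := Zf p sg dv) in *. set (s1 := ln a) in *.
  set (E0 := Hen p al (al * ga) Y Z s0) in *.
  set (h := Hen p al (al * ga) Y Z s1).
  set (ka := al - ga) in *.
  rewrite <- P7 in Hk.
  assert (Hka12 : ka <= 1 / 2) by (eapply Rle_trans; [exact Hk|]; unfold kstar; eapply Rle_trans; [apply Rmin_l|apply Rmin_l]).
  set (CC := (2 * alhi M + 1 + alhi M * alhi M) * (Bbar M * Bbar M)).
  assert (HCC : 0 <= CC) by (unfold CC; apply Rmult_le_pos; [assert (0 <= alhi M * alhi M) by apply Rle_0_sqr; lra|apply Rle_0_sqr]).
  assert (Hkh : ka * (4 * CC + 8 * alhi M) <= hstar M delta eps).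
  { assert (Hk2 : ka <= hstar M delta eps / (4 * CC + 8 * alhi M)).
    { eapply Rle_trans; [exact Hk|]. unfold kstar. fold CC.
      replace (4 * (2 * alhi M + 1 + alhi M * alhi M) * (Bbar M * Bbar M)) with (4 * CC) by (unfold CC; ring).
      apply Rmin_r. }
    apply (Rmult_le_compat_r (4 * CC + 8 * alhi M)) in Hk2; [|lra].
    replace (hstar M delta eps / (4 * CC + 8 * alhi M) * (4 * CC + 8 * alhi M)) with (hstar M delta eps) in Hk2
      by (field; lra). auto. }
  assert (Hka0 : 0 <= ka) by (unfold ka; lra).
  assert (HBp : (p + 1) * (1 + al * ga / 2 + (al - ga) * al) < Rpower (Bbar M) (p - 1)).
  { set (X := (pM M + 1) * (1 + alhi M * alhi M / 2 + alhi M * alhi M) + 1).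
    assert (HpM1 : 1 < plo M) by (unfold plo; assert (0 < 8 / (3 * (M - 2))) by (apply Rdiv_lt_0_compat; lra); lra).
    assert (EX : Rpower (Bbar M) (plo M - 1) = X).
    { unfold Bbar. fold X. rewrite Rpower_mult. replace (1 / (plo M - 1) * (plo M - 1)) with 1 by (field; lra).
      apply Rpower_1. unfold X. assert (0 <= (pM M + 1) * (1 + alhi M * alhi M / 2 + alhi M * alhi M)).
      { apply Rmult_le_pos. lra. assert (0 <= alhi M * alhi M) by apply Rle_0_sqr. lra. } lra. }
    assert (Rpower (Bbar M) (plo M - 1) <= Rpower (Bbar M) (p - 1)) by (apply Rle_Rpower; lra).
    assert (Hkal : (al - ga) * al <= alhi M * alhi M).
    { apply Rle_trans with (al * al). apply Rmult_le_compat_r; lra. apply Rmult_le_compat; lra. }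
    assert (1 + al * ga / 2 + (al - ga) * al <= 1 + alhi M * alhi M / 2 + alhi M * alhi M) by lra.
    assert ((p + 1) * (1 + al * ga / 2 + (al - ga) * al) <= (pM M + 1) * (1 + alhi M * alhi M / 2 + alhi M * alhi M)).
    { apply Rmult_le_compat; try lra. assert (0 <= al * ga) by (apply Rmult_le_pos; lra).
      assert (0 <= (al - ga) * al) by (apply Rmult_le_pos; lra). lra. }
    unfold X in EX. lra. }
  assert (HYs1 : Y s1 = 0).
  { unfold Y, Yf, s1. rewrite exp_ln by lra. rewrite Hva. ring. }
  assert (Hh := h_bound p al ga Y Z s0 s1 (Bbar M) P1' P2 P3 HS Hs01 HYp HZ1 HYs1 HZp HE0
    ltac:(unfold E0 in HE1; lra) Hka12 C9 HBp).
  fold E0 h in Hh. fold ka in Hh.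
  assert (Hh2 : h <= hstar M delta eps / 2).
  { assert (ka * (2 * al + 1 + al * ga) * (Bbar M * Bbar M) <= ka * CC).
    { unfold CC. rewrite Rmult_assoc. apply Rmult_le_compat_l. auto.
      apply Rmult_le_compat_r. apply Rle_0_sqr. assert (al * ga <= alhi M * alhi M) by auto. lra. }
    assert (4 * (ka * CC) <= hstar M delta eps).
    { assert (0 <= ka * (8 * alhi M)) by (apply Rmult_le_pos; lra).
      replace (ka * (4 * CC + 8 * alhi M)) with (4 * (ka * CC) + ka * (8 * alhi M)) in Hkh by ring. lra. }
    lra. }
  assert (Hh0 : 0 <= h) by (unfold h; apply Rle_trans with (1 := HE0); apply (Hmono p al ga Y Z s0 s1); auto; lra).
  assert (HYnn : forall x, s0 <= x <= s1 -> 0 <= Y x).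
  { intros x Hx. destruct (Req_dec x s1). subst x; lra. left; apply HYp; lra. }
  assert (HG := gronwall p al ga Y Z s0 s1 P1' P2 P3 HS HYnn HYs1 HE0).
  fold h in HG.
  assert (Hr0 : 0 < r) by lra.
  set (x := s1 + ln r).
  assert (Hlnr : ln r <= 0). { rewrite <- ln_1. apply ln_le; lra. }
  assert (Hlnr2 : - ell delta <= ln r). { unfold ell. rewrite Ropp_involutive. apply ln_le; lra. }
  assert (Hx : s0 <= x <= s1) by (unfold x; lra).
  assert (Hex : exp x = a * r) by (unfold x, s1; rewrite exp_plus, !exp_ln; lra).
  assert (HYx : Y x = sg * Rpower r al * (Rpower a al * v (a * r))).
  { unfold Y, Yf. fold al. rewrite Hex. unfold x, s1, Rpower. rewrite Rmult_plus_distr_l, exp_plus. ring. }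
  assert (Hrp : 0 < Rpower r al) by apply Rpower_pos.
  assert (Habs : Rabs (Rpower a al * v (a * r)) = Y x / Rpower r al).
  { assert (HY0 := HYnn x Hx).
    assert (E1 : Rabs (Y x) = Y x) by (apply Rabs_right; lra).
    rewrite HYx in E1. rewrite Rabs_mult, Rabs_mult, Rabs_sg, (Rabs_right (Rpower r al)) in E1 by (auto; lra).
    rewrite HYx. rewrite <- E1. field. lra. }
  rewrite Habs.
  set (be := al * ga) in *.
  set (c0 := sqrt (2 * h / be)).
  assert (Hbe : 0 < be) by lra.
  assert (HYx2 : Y x <= c0 * exp (alhi M * ell delta)).
  { eapply Rle_trans. apply HG; auto. fold c0.
    assert (Hc0 : 0 <= c0) by apply sqrt_pos.
    assert (Hk1 : sqrt be <= alhi M).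
    { rewrite <- (sqrt_square (alhi M)) by lra. apply sqrt_le_1_alt. lra. }
    assert (exp (sqrt be * (s1 - x)) <= exp (alhi M * ell delta)).
    { apply exp_le. unfold x. replace (s1 - (s1 + ln r)) with (- ln r) by ring.
      apply Rmult_le_compat. apply sqrt_pos. lra. auto. lra. }
    assert (exp (sqrt be * (s1 - x)) - 1 <= exp (alhi M * ell delta)) by lra.
    apply Rmult_le_compat_l; auto. }
  assert (Hrp2 : exp (- (alhi M * ell delta)) <= Rpower r al).
  { unfold Rpower. apply exp_le.
    assert (0 <= (al - alhi M) * ln r) by (replace ((al - alhi M) * ln r) with ((alhi M - al) * (- ln r)) by ring; apply Rmult_le_pos; lra).
    assert (alhi M * (- ell delta) <= alhi M * ln r) by (apply Rmult_le_compat_l; lra). nra. }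
  assert (Hc0 : 0 <= c0) by apply sqrt_pos.
  assert (HQ : Y x / Rpower r al <= c0 * Kf M delta).
  { unfold Kf. set (E := exp (alhi M * ell delta)).
    assert (HE : 0 < E) by apply exp_pos.
    assert (EE : exp (2 * alhi M * ell delta) = E * E) by (unfold E; rewrite <- exp_plus; f_equal; ring).
    assert (Einv : exp (- (alhi M * ell delta)) = / E) by (unfold E; apply exp_Ropp).
    rewrite Einv in Hrp2. rewrite EE.
    apply Rle_trans with (c0 * E / Rpower r al).
    { unfold Rdiv. apply Rmult_le_compat_r. left; apply Rinv_0_lt_compat; auto. auto. }
    apply Rle_trans with (c0 * E / / E).
    { unfold Rdiv. apply Rmult_le_compat_l. apply Rmult_le_pos; lra. apply Rinv_le_contravar; auto.
      apply Rinv_0_lt_compat; auto. }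
    right. field. lra. }
  assert (Hc0b : c0 <= eps / Kf M delta / 2).
  { unfold c0. rewrite <- (sqrt_square (eps / Kf M delta / 2)).
    2: { apply Rmult_le_pos. apply Rmult_le_pos; [lra| left; apply Rinv_0_lt_compat; auto]. lra. }
    apply sqrt_le_1_alt.
    assert (Hhs : hstar M delta eps <= belo M * ((eps / Kf M delta) * (eps / Kf M delta)) / 4) by (unfold hstar; apply Rmin_r).
    assert (2 * h <= hstar M delta eps) by lra.
    assert (2 * h / be <= hstar M delta eps / be) by (unfold Rdiv; apply Rmult_le_compat_r; [left; apply Rinv_0_lt_compat; auto|auto]).
    assert (hstar M delta eps / be <= hstar M delta eps / belo M).
    { unfold Rdiv. apply Rmult_le_compat_l. lra. apply Rinv_le_contravar; auto. }
    assert (hstar M delta eps / belo M <= (eps / Kf M delta / 2) * (eps / Kf M delta / 2)).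
    { apply (Rmult_le_reg_r (belo M)). auto. replace (hstar M delta eps / belo M * belo M) with (hstar M delta eps) by (field; lra).
      replace (eps / Kf M delta / 2 * (eps / Kf M delta / 2) * belo M) with (belo M * ((eps / Kf M delta) * (eps / Kf M delta)) / 4) by (field; lra).
      auto. }
    lra. }
  assert (c0 * Kf M delta <= eps / 2).
  { apply (Rmult_le_compat_r (Kf M delta)) in Hc0b; [|lra].
    replace (eps / Kf M delta / 2 * Kf M delta) with (eps / 2) in Hc0b by (field; lra). auto. }
  lra.
Qed.

Lemma kstar_facts M delta eps ka : 2 < M -> 0 < delta < 1 -> 0 < eps -> 0 <= ka -> ka <= kstar M delta eps ->
  ka <= 1 / 2 /\ ka <= ddlo M * cclo M /\ 8 * (ka * alhi M) <= hstar M delta eps.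
Proof.
  intros HM Hd He Hk0 Hk.
  destruct (consts_pos M delta eps HM Hd He) as [C1 [C2 [C3 [C4 [C5 [C6 [C7 [C8 [C9 [C10 [C11 C12]]]]]]]]]]].
  split. eapply Rle_trans; [exact Hk|]; unfold kstar; eapply Rle_trans; [apply Rmin_l|apply Rmin_l].
  split. eapply Rle_trans; [exact Hk|]; unfold kstar; eapply Rle_trans; [apply Rmin_l|apply Rmin_r].
  set (CC := (2 * alhi M + 1 + alhi M * alhi M) * (Bbar M * Bbar M)).
  assert (HCC : 0 <= CC) by (unfold CC; apply Rmult_le_pos; [assert (0 <= alhi M * alhi M) by apply Rle_0_sqr; lra|apply Rle_0_sqr]).
  assert (Hk2 : ka <= hstar M delta eps / (4 * CC + 8 * alhi M)).
  { eapply Rle_trans; [exact Hk|]. unfold kstar.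
    replace (4 * CC) with (4 * (2 * alhi M + 1 + alhi M * alhi M) * (Bbar M * Bbar M)) by (unfold CC; field).
    apply Rmin_r. }
  apply (Rmult_le_compat_r (4 * CC + 8 * alhi M)) in Hk2; [|lra].
  replace (hstar M delta eps / (4 * CC + 8 * alhi M) * (4 * CC + 8 * alhi M)) with (hstar M delta eps) in Hk2
    by (field; lra).
  assert (0 <= ka * (4 * CC)) by (apply Rmult_le_pos; lra).
  replace (ka * (4 * CC + 8 * alhi M)) with (ka * (4 * CC) + 8 * (ka * alhi M)) in Hk2 by field. lra.
Qed.

Lemma time_consts M p : 2 < M -> plo M <= p <= pM M ->
  let al := 2 / (p - 1) in let ga := M - 2 - al in
  let dd := sqrt ((p + 1) * (al * ga) / 2) in
  0 < dd /\ dd * dd = (p + 1) * (al * ga) / 2 /\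
  Rpower (Rpower (dd * dd) (1 / (p - 1))) (p - 1) = dd * dd /\
  Rpower (dd * dd) (1 / (p - 1)) <= ybar M /\ ddlo M * cclo M <= dd * ((p - 1) / (p + 1)).
Proof.
  intros HM Hp al ga dd.
  destruct (pbounds M p HM Hp) as [P1' [P2 [P3 [P4 [P5 [P6 [P7 P8]]]]]]]. fold al ga in P2, P3, P4, P5, P6, P7.
  assert (Hpl : 1 < plo M) by (unfold plo; assert (0 < 8 / (3 * (M - 2))) by (apply Rdiv_lt_0_compat; lra); lra).
  assert (Hbe : 0 < al * ga) by (apply Rmult_lt_0_compat; lra).
  assert (HX : 0 < (p + 1) * (al * ga) / 2) by (apply Rdiv_lt_0_compat; [apply Rmult_lt_0_compat; lra|lra]).
  assert (Hdd : dd * dd = (p + 1) * (al * ga) / 2) by (apply sqrt_sqrt; lra).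
  assert (Hdd0 : 0 < dd) by (apply sqrt_lt_R0; auto).
  split. auto. split. auto. split.
  { rewrite Rpower_mult. replace (1 / (p - 1) * (p - 1)) with 1 by (field; lra). apply Rpower_1. lra. }
  split.
  - unfold ybar. set (X := (pM M + 1) * (alhi M * alhi M) / 2 + 1).
    assert (HX1 : 1 <= X). { unfold X. assert (0 <= (pM M + 1) * (alhi M * alhi M) / 2).
      { apply Rmult_le_pos. apply Rmult_le_pos. lra. apply Rle_0_sqr. lra. } lra. }
    assert (Hddx : dd * dd <= X).
    { rewrite Hdd. unfold X. assert ((p + 1) * (al * ga) <= (pM M + 1) * (alhi M * alhi M)).
      { apply Rmult_le_compat; lra. } lra. }
    apply Rle_trans with (Rpower X (1 / (p - 1))).
    apply Rle_Rpower_l. left; apply Rdiv_lt_0_compat; lra. split; lra.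
    apply Rle_Rpower. auto. apply Rmult_le_compat_l. lra. apply Rinv_le_contravar; lra.
  - apply Rmult_le_compat. unfold ddlo; apply sqrt_pos. left; unfold cclo; apply Rdiv_lt_0_compat; lra.
    + unfold ddlo. rewrite <- (sqrt_sqrt (dd * dd)) in Hdd. unfold dd. apply sqrt_le_1_alt.
      assert (belo M <= al * ga) by auto. assert (al * ga <= (p + 1) * (al * ga) / 2).
      { assert (2 * (al * ga) <= (p + 1) * (al * ga)) by (apply Rmult_le_compat_r; lra). lra. } lra.
      apply Rmult_le_pos; lra.
    + unfold cclo. unfold Rdiv. apply Rmult_le_compat. lra. left; apply Rinv_0_lt_compat; lra. lra.
      apply Rinv_le_contravar; lra.
Qed.

Lemma sq_min_sqrt c : 0 < c -> Rmin 1 (sqrt c) * Rmin 1 (sqrt c) <= c /\ 0 < Rmin 1 (sqrt c) <= 1.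
Proof.
  intros Hc. assert (Hs : 0 < sqrt c) by (apply sqrt_lt_R0; auto).
  assert (H1 : Rmin 1 (sqrt c) <= sqrt c) by apply Rmin_r.
  assert (H2 : Rmin 1 (sqrt c) <= 1) by apply Rmin_l.
  assert (H3 : 0 < Rmin 1 (sqrt c)) by (apply Rmin_pos; lra).
  assert (E : sqrt c * sqrt c = c) by (apply sqrt_sqrt; lra).
  assert (Rmin 1 (sqrt c) * Rmin 1 (sqrt c) <= sqrt c * sqrt c) by (apply Rmult_le_compat; lra).
  split; lra.
Qed.

Lemma Rabs_le_inv x c : Rabs x <= c -> - c <= x <= c.
Proof. intros H. assert (x <= Rabs x) by apply Rle_abs. assert (- x <= Rabs x) by (rewrite <- Rabs_Ropp; apply Rle_abs). lra. Qed.

Lemma pern M m i p v t s delta eps :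
  2 < M -> (2 <= m)%nat -> (1 <= i)%nat -> (i <= m - 1)%nat -> 0 < delta < 1 -> 0 < eps ->
  plo M <= p < pM M -> 4 / (p - 1) - (M - 2) <= kstar M delta eps ->
  radial_sol M p v -> nodal_zeros m v t -> crit_points m v t s ->
  ((i = 1)%nat \/ s (i - 1)%nat / t i <= exp (- Lstar M delta eps)) ->
  forall r, 1 - delta <= r <= 1 -> Rabs (Rpower (t i) (2 / (p - 1)) * v (t i * r)) < eps.
Proof.
  intros HM Hm Hi1 Hi2 Hd He Hp Hk Hrad Hnod Hcrit Hcase r Hr.
  destruct (consts_pos M delta eps HM Hd He) as [C1 [C2 [C3 [C4 [C5 [C6 [C7 [C8 [C9 [C10 [C11 C12]]]]]]]]]]].
  destruct (pbounds M p HM ltac:(lra)) as [P1' [P2 [P3 [P4 [P5 [P6 [P7 P8]]]]]]].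
  destruct (kstar_facts M delta eps (4 / (p - 1) - (M - 2)) HM Hd He ltac:(lra) Hk) as [K1 [K2 K3]].
  rewrite <- P7 in K1, K2, K3.
  set (al := 2 / (p - 1)) in *. set (ga := M - 2 - al) in *.
  destruct Hrad as [dv [Hv [Hdv [Hdv0 [Hv0 [Hv1 Hv1eq]]]]]].
  destruct (zone_facts m i v t Hi1 Hi2 Hm Hnod) as [Z1 [Z2 [Z3 [Z4 [Z5 Z6]]]]].
  set (lo := t (i - 1)%nat) in *. set (a := t i) in *.
  assert (Hcont : forall x, 0 < x < 1 -> continuity_pt v x) by (intros x Hx; apply (dcont v x (dv x)); apply Hv; auto).
  destruct (zone_sign v lo a Z1 Z2 Z4 Hcont Z6) as [sg [Hsg Hpos]].
  set (s1 := ln a).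
  assert (Hs1 : s1 < 0) by (unfold s1; rewrite <- ln_1; apply ln_increasing; lra).
  assert (HSYS : forall s0, SYS p al ga (Yf p sg v) (Zf p sg dv) s0 s1)
    by (intros; apply (sys_of_v M p sg v dv); auto).
  assert (HYpos : forall x, lo < exp x < a -> 0 < Yf p sg v x).
  { intros x Hx. unfold Yf. fold al.
    replace (sg * (exp (al * x) * v (exp x))) with (exp (al * x) * (sg * v (exp x))) by ring.
    apply Rmult_lt_0_compat. apply exp_pos. apply Hpos; auto. }
  assert (HZpos : forall x, 0 < sg * - dv (exp x) -> 0 < Zf p sg dv x).
  { intros x Hx. unfold Zf. fold al.
    replace (- sg * (exp ((al + 1) * x) * dv (exp x))) with (exp ((al + 1) * x) * (sg * - dv (exp x))) by ring.
    apply Rmult_lt_0_compat. apply exp_pos. auto. }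
  assert (Hexps1 : exp s1 = a) by (unfold s1; apply exp_ln; lra).
  destruct Hcrit as [Hs00 Hcrit].
  destruct (Nat.eq_dec i 1) as [Hi|Hi].
  -
    assert (Hlo : lo = 0) by (unfold lo; rewrite Hi; simpl; apply Hnod).
    assert (Hsig : s (i - 1)%nat = 0) by (rewrite Hi; simpl; auto).
    assert (Hflux := flux_sign M p v dv sg lo 0 a ltac:(lra) P1' Hdv Z1 Z2 Z4 ltac:(lra) ltac:(lra) Hsg Hpos
      (or_introl (conj eq_refl (conj Hlo Hdv0)))).
    set (Cn := (al + 1) * (al + 1) + al * ga + 1).
    assert (HCn : 0 < Cn) by (unfold Cn; assert (0 <= (al + 1) * (al + 1)) by apply Rle_0_sqr; assert (0 < al * ga) by (apply Rmult_lt_0_compat; lra); lra).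
    assert (Hsmall : forall c, 0 < c -> exists X, forall x, x <= X ->
       Rabs (Hen p al (al * ga) (Yf p sg v) (Zf p sg dv) x) <= c).
    { intros c Hc. destruct (sq_min_sqrt (c / Cn)) as [Q1 Q2]. apply Rdiv_lt_0_compat; auto.
      set (eta := Rmin 1 (sqrt (c / Cn))) in *.
      destruct (YZ_small p sg v dv P1' Hsg Hv0 Hdv0 eta ltac:(lra)) as [X HX].
      exists X. intros x Hx. destruct (HX x Hx) as [HX1 HX2].
      apply Rle_trans with (Cn * (eta * eta)).
      { unfold Cn. apply (Hen_small p al (al * ga) _ _ x eta); auto; try lra. }
      apply (Rmult_le_compat_l Cn) in Q1; [|lra].
      replace (Cn * (c / Cn)) with c in Q1 by (field; lra). lra. }
    destruct (Hsmall (hstar M delta eps / 8) ltac:(lra)) as [X HX].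
    set (s0 := Rmin X (s1 - ell delta - 1)).
    assert (Hs0a : s0 <= X) by apply Rmin_l. assert (Hs0b : s0 <= s1 - ell delta - 1) by apply Rmin_r.
    assert (HE0 : 0 <= Hen p al (al * ga) (Yf p sg v) (Zf p sg dv) s0).
    { destruct (Rle_or_lt 0 (Hen p al (al * ga) (Yf p sg v) (Zf p sg dv) s0)) as [H|H]; auto. exfalso.
      set (E0 := Hen p al (al * ga) (Yf p sg v) (Zf p sg dv) s0) in *.
      destruct (Hsmall (- E0 / 2) ltac:(lra)) as [X' HX'].
      set (x' := Rmin X' (s0 - 1)).
      assert (x' <= X') by apply Rmin_l. assert (x' <= s0 - 1) by apply Rmin_r.
      assert (HA := HX' x' ltac:(lra)).
      assert (HB : Hen p al (al * ga) (Yf p sg v) (Zf p sg dv) x' <= E0).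
      { apply (Hmono p al ga (Yf p sg v) (Zf p sg dv) x' s1); auto; lra. }
      apply Rabs_le_inv in HA. lra. }
    assert (HE1 := HX s0 Hs0a). apply Rabs_le_inv in HE1.
    apply (finish M p sg v dv a s0 delta eps); fold s1; fold al; fold ga; auto; try lra.
    + intros x Hx. apply HYpos. split. rewrite Hlo. apply exp_pos. rewrite <- Hexps1. apply exp_increasing; lra.
    + intros x Hx. left. apply HZpos.
      assert (sg * dv (exp x) < 0). { apply Hflux. split. apply exp_pos. rewrite <- Hexps1. apply exp_le; lra. }
      lra.
    + apply HZpos. assert (sg * dv (exp s1) < 0) by (apply Hflux; rewrite Hexps1; lra). lra.
  -
    destruct Hcase as [Hcase|Hratio]. exfalso; lia.
    destruct (Hcrit (i - 1)%nat ltac:(lia) ltac:(lia)) as [[Hsg1 Hsg2] Hsgd].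
    replace (S (i - 1)) with i in Hsg2 by lia. fold lo a in Hsg1, Hsg2.
    set (sig := s (i - 1)%nat) in *.
    assert (Hdsig : dv sig = 0).
    { assert (E1 := is_derive_unique v sig 0 Hsgd). assert (E2 := is_derive_unique v sig (dv sig) (Hv sig ltac:(lra))).
      rewrite E1 in E2. auto. }
    assert (Hflux := flux_sign M p v dv sg lo sig a ltac:(lra) P1' Hdv Z1 Z2 Z4 ltac:(lra) ltac:(lra) Hsg Hpos
      (or_intror (conj Hsg1 Hdsig))).
    set (s0 := ln sig).
    assert (Hsig0 : 0 < sig) by lra.
    assert (Hexps0 : exp s0 = sig) by (unfold s0; apply exp_ln; lra).
    assert (HL : Lstar M delta eps <= s1 - s0).
    { assert (Hq : 0 < sig / a) by (apply Rdiv_lt_0_compat; lra).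
      assert (ln (sig / a) <= - Lstar M delta eps).
      { rewrite <- (ln_exp (- Lstar M delta eps)). apply ln_le; auto. }
      rewrite ln_div in H by lra. unfold s0, s1. lra. }
    assert (HLs : ell delta + 1 <= Lstar M delta eps).
    { unfold Lstar. assert (0 < 2 * ybar M / qstar M delta eps) by (apply Rdiv_lt_0_compat; lra).
      assert (0 < 2 * PI / (ddlo M * cclo M)) by (apply Rdiv_lt_0_compat; [assert (0 < PI) by apply PI_RGT_0; lra|apply Rmult_lt_0_compat; lra]).
      lra. }
    assert (HYp : forall x, s0 <= x < s1 -> 0 < Yf p sg v x).
    { intros x Hx. apply HYpos. split. apply Rlt_le_trans with sig. lra. rewrite <- Hexps0. apply exp_le; lra.
      rewrite <- Hexps1. apply exp_increasing; lra. }
    assert (HZp : forall x, s0 <= x <= s1 -> 0 <= Zf p sg dv x).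
    { intros x Hx. destruct (Req_dec x s0).
      - subst x. unfold Zf. rewrite Hexps0, Hdsig. lra.
      - left. apply HZpos. assert (sg * dv (exp x) < 0).
        { apply Hflux. split. rewrite <- Hexps0. apply exp_increasing; lra. rewrite <- Hexps1. apply exp_le; lra. }
        lra. }
    assert (HZ1 : 0 < Zf p sg dv s1).
    { apply HZpos. assert (sg * dv (exp s1) < 0) by (apply Hflux; rewrite Hexps1; lra). lra. }
    assert (HZ0 : Zf p sg dv s0 = 0) by (unfold Zf; rewrite Hexps0, Hdsig; ring).
    assert (HYs1 : Yf p sg v s1 = 0) by (unfold Yf; rewrite Hexps1, Z5; ring).
    destruct (time_consts M p HM ltac:(lra)) as [T1 [T2 [T3 [T4 T5]]]].
    fold al ga in T1, T2, T3, T4, T5.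
    set (dd := sqrt ((p + 1) * (al * ga) / 2)) in *.
    set (y1 := Rpower (dd * dd) (1 / (p - 1))) in *.
    assert (Hy1 : 0 < y1) by apply Rpower_pos.
    assert (HTB := time_bound p al ga (Yf p sg v) (Zf p sg dv) s0 s1 y1 dd P1' P2 P3 (HSYS s0) ltac:(lra)
      HYp HZ1 HYs1 HZp HZ0 Hy1 T1 T2 T3 ltac:(lra)).
    set (Y0 := Yf p sg v s0) in *.
    assert (HY0 : 0 < Y0) by (apply HYp; lra).
    set (q := sqrt (2 * (P1 p Y0 / (p + 1)))) in *.
    assert (HP1 : 0 < P1 p Y0) by (rewrite P1_pos by auto; apply Rmult_lt_0_compat; [apply Rmult_lt_0_compat; [apply Rpower_pos|]|]; lra).
    assert (Hq0 : 0 < q) by (apply sqrt_lt_R0; apply Rmult_lt_0_compat; [lra|apply Rdiv_lt_0_compat; lra]).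
    assert (Hqq : q * q = 2 * (P1 p Y0 / (p + 1))) by (apply sqrt_sqrt; left; apply Rmult_lt_0_compat; [lra|apply Rdiv_lt_0_compat; lra]).
    assert (Hqs : q < qstar M delta eps).
    { destruct (Rlt_or_le q (qstar M delta eps)) as [Hl|Hl]; auto. exfalso.
      assert (2 * y1 / q <= 2 * ybar M / qstar M delta eps).
      { unfold Rdiv. apply Rmult_le_compat. lra. left; apply Rinv_0_lt_compat; lra. lra.
        apply Rinv_le_contravar; lra. }
      assert (2 * PI / (dd * ((p - 1) / (p + 1))) <= 2 * PI / (ddlo M * cclo M)).
      { unfold Rdiv. apply Rmult_le_compat_l. assert (0 < PI) by apply PI_RGT_0; lra.
        apply Rinv_le_contravar. apply Rmult_lt_0_compat; lra. lra. }
      unfold Lstar in HL. lra. }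
    assert (Hqq2 : q * q < Rmin (hstar M delta eps / 8) (1 / (pM M + 1))).
    { assert (q * q < qstar M delta eps * qstar M delta eps) by (apply Rmult_le_0_lt_compat; lra).
      unfold qstar in H. rewrite sqrt_sqrt in H. auto.
      apply Rmin_glb. lra. left; apply Rdiv_lt_0_compat; lra. }
    assert (Hm1 : q * q < hstar M delta eps / 8) by (eapply Rlt_le_trans; [exact Hqq2| apply Rmin_l]).
    assert (Hm2 : q * q < 1 / (pM M + 1)) by (eapply Rlt_le_trans; [exact Hqq2| apply Rmin_r]).
    assert (HY01 : Y0 <= 1).
    { destruct (Rle_or_lt Y0 1) as [Hl|Hl]; auto. exfalso.
      rewrite P1_pos in Hqq by lra.
      assert (1 <= Rpower Y0 (p - 1)). { assert (HH : Rpower Y0 0 <= Rpower Y0 (p - 1)) by (apply Rle_Rpower; lra). rewrite Rpower_O in HH by lra. auto. }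
      assert (1 <= Y0 * Y0) by nra.
      assert (1 <= Rpower Y0 (p - 1) * Y0 * Y0).
      { rewrite Rmult_assoc. apply Rle_trans with (1 * 1). lra. apply Rmult_le_compat; lra. }
      assert (2 / (p + 1) <= q * q).
      { rewrite Hqq. unfold Rdiv. rewrite <- Rmult_assoc. apply Rmult_le_compat_r. left; apply Rinv_0_lt_compat; lra. lra. }
      assert (1 / (pM M + 1) <= 2 / (p + 1)).
      { unfold Rdiv. apply Rmult_le_compat. lra. left; apply Rinv_0_lt_compat; lra. lra. apply Rinv_le_contravar; lra. }
      lra. }
    assert (HE0eq : Hen p al (al * ga) (Yf p sg v) (Zf p sg dv) s0 = (al - ga) * al * (Y0 * Y0) / 2 + P1 p Y0 / (p + 1)).
    { unfold Hen. rewrite HZ0. fold Y0. field. lra. }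
    assert (HE0a : 0 <= (al - ga) * al * (Y0 * Y0) / 2).
    { apply Rmult_le_pos; [|lra]. apply Rmult_le_pos. apply Rmult_le_pos; lra. apply Rle_0_sqr. }
    assert (HE0b : (al - ga) * al * (Y0 * Y0) / 2 <= hstar M delta eps / 16).
    { assert (Y0 * Y0 <= 1) by (replace 1 with (1 * 1) by ring; apply Rmult_le_compat; lra).
      assert ((al - ga) * al <= (al - ga) * alhi M) by (apply Rmult_le_compat_l; lra).
      assert ((al - ga) * al * (Y0 * Y0) <= (al - ga) * al * 1).
      { apply Rmult_le_compat_l. apply Rmult_le_pos; lra. auto. } lra. }
    assert (HP1b : 0 < P1 p Y0 / (p + 1)) by (apply Rdiv_lt_0_compat; lra).
    apply (finish M p sg v dv a s0 delta eps); fold s1; fold al; fold ga; auto; try lra.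
Qed.

Lemma lim_ev (u : nat -> R) (l : R) : is_lim_seq u l -> forall e, 0 < e ->
  exists N, forall n, (N <= n)%nat -> Rabs (u n - l) < e.
Proof.
  intros H e He. apply is_lim_seq_spec in H. hnf in H. exact (H (mkposreal e He)).
Qed.

Theorem lemma2p10 (M : R) (m i : nat) (p : nat -> R) (v : nat -> R -> R)
  (t s : nat -> nat -> R) :
  2 < M ->
  (2 <= m)%nat ->
  (1 <= i)%nat -> (i <= m - 1)%nat ->
  (forall n, 1 < p n < pM M) ->
  is_lim_seq p (pM M) ->
  (forall n, radial_sol M (p n) (v n)) ->
  (forall n, 0 < v n 0) ->
  (forall n, nodal_zeros m (v n) (t n)) ->
  (forall n, crit_points m (v n) (t n) (s n)) ->
  is_lim_seq (fun n => s n (i - 1)%nat / t n i) 0 ->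
  is_lim_seq (fun n => t n i * Rpower (Rabs (v n (s n (i - 1)%nat))) ((p n - 1) / 2))
             p_infty ->
  forall delta, 0 < delta < 1 ->
    forall eps, 0 < eps ->
      exists N : nat, forall n, (N <= n)%nat ->
        forall r, 1 - delta <= r <= 1 ->
          Rabs (Rpower (t n i) (2 / (p n - 1)) * v n (t n i * r)) < eps.
Proof.
  intros HM Hm Hi1 Hi2 Hp Hplim Hrad Hv0 Hnod Hcrit Hratio _ delta Hd eps He.
  destruct (consts_pos M delta eps HM Hd He) as [C1 [C2 [C3 [C4 [C5 [C6 [C7 [C8 [C9 [C10 [C11 C12]]]]]]]]]]].
  set (ks := kstar M delta eps) in *.
  assert (HpM := pM_eq M HM).
  assert (Hpl : plo M < pM M).
  { unfold plo. assert (8 / (3 * (M - 2)) < 4 / (M - 2)).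
    { apply (Rmult_lt_reg_r (3 * (M - 2))). lra. field_simplify; lra. } lra. }
  set (pt := 1 + 4 / (M - 2 + ks)).
  assert (Hpt : pt < pM M).
  { unfold pt. assert (4 / (M - 2 + ks) < 4 / (M - 2)).
    { unfold Rdiv. apply Rmult_lt_compat_l. lra. apply Rinv_lt_contravar. apply Rmult_lt_0_compat; lra. lra. } lra. }
  set (rho := pM M - Rmax (plo M) pt).
  assert (Hrho : 0 < rho) by (unfold rho; apply Rlt_Rminus; apply Rmax_lub_lt; auto).
  destruct (lim_ev p (pM M) Hplim rho Hrho) as [N1 HN1].
  destruct (lim_ev _ 0 Hratio (exp (- Lstar M delta eps)) (exp_pos _)) as [N2 HN2].
  exists (Nat.max N1 N2). intros n Hn r Hr.
  specialize (HN1 n ltac:(lia)). specialize (HN2 n ltac:(lia)).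
  assert (Hpn : Rmax (plo M) pt <= p n).
  { apply Rabs_def2 in HN1. unfold rho in HN1. lra. }
  assert (Hpn1 : plo M <= p n) by (eapply Rle_trans; [apply Rmax_l|exact Hpn]).
  assert (Hpn2 : pt <= p n) by (eapply Rle_trans; [apply Rmax_r|exact Hpn]).
  specialize (Hp n).
  apply (pern M m i (p n) (v n) (t n) (s n) delta eps); auto.
  - lra.
  - assert (Hks : 0 < M - 2 + ks) by lra.
    assert (4 / (M - 2 + ks) <= p n - 1) by (unfold pt in Hpn2; lra).
    assert (4 / (p n - 1) <= M - 2 + ks).
    { apply (Rmult_le_reg_r (p n - 1)). lra. replace (4 / (p n - 1) * (p n - 1)) with 4 by (field; lra).
      apply (Rmult_le_compat_l (M - 2 + ks)) in H; [|lra].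
      replace ((M - 2 + ks) * (4 / (M - 2 + ks))) with 4 in H by (field; lra). lra. }
    fold ks. lra.
  - destruct (Nat.eq_dec i 1) as [Hi|Hi]. left; auto. right.
    rewrite Rminus_0_r in HN2. eapply Rle_trans. apply Rle_abs. lra.
Qed.
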